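(* Let $N$ be a positive integer and let $(\mathbf{l}^N_n)_{n\in\mathbb{N}^+}$ be a sequence of numbers in $[-1,1]$ such that for some fixed sign $\varepsilon\in\{1,-1\}$ we have $\mathbf{l}^N_n=\varepsilon(-1)^n$ for all $n\ge N$. Let $\mathbb{A}=(a_n)_{n\in\mathbb{N}^+}$ be a sequence of integers with $2\le a_1<a_2<\cdots<a_n<a_{n+1}<\cdots$. Then the Euler product $$\zeta^{\mathbf{l}^N_n}_{\mathbb{A}}(s)=\prod_{n=1}^{\infty}\frac{1}{1-\mathbf{l}^N_n a_n^{-s}}$$ has an analytic continuation to the half-plane $\Re(s)>1/2$ which has no zeros and no singularities in this half-plane.
   Context: For $a>0$, $a^{-s}=e^{-s\ln a}$. The product converges for $\Re(s)>1$, where it defines $\zeta^{\mathbf{l}^N_n}_{\mathbb{A}}$. *)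

(* Defs.v *)
From Stdlib Require Import Reals ZArith.
From Coquelicot Require Import Coquelicot.
Open Scope R_scope.

Definition cexp (z : C) : C := (exp (Re z) * cos (Im z), exp (Re z) * sin (Im z)).

Definition cpow_neg (a : R) (s : C) : C := cexp (Copp (Cmult s (RtoC (ln a)))).

Definition euler_factor (l : nat -> R) (a : nat -> Z) (n : nat) (s : C) : C :=
  Cinv (Cminus (RtoC 1) (Cmult (RtoC (l n)) (cpow_neg (IZR (a n)) s))).

Fixpoint partial_euler_prod (l : nat -> R) (a : nat -> Z) (M : nat) (s : C) : C :=
  match M with
  | O => RtoC 1
  | S m => Cmult (partial_euler_prod l a m s) (euler_factor l a (S m) s)
  end.

Definition C_holomorphic_at (f : C -> C) (z : C) : Prop :=
  ex_derive (K := C_AbsRing) (V := C_NormedModule) f z.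

(* Main.v *)
Require Import Defs.
From Stdlib Require Import Reals ZArith Lra Lia.
From Coquelicot Require Import Coquelicot.
Open Scope R_scope.


Lemma Rabs_le_inv (x b : R) : Rabs x <= b -> - b <= x <= b.
Proof. unfold Rabs; destruct (Rcase_abs x); lra. Qed.

Lemma Cmod_le_ReIm (z : C) : Cmod z <= Rabs (fst z) + Rabs (snd z).
Proof.
  unfold Cmod. rewrite <- (sqrt_Rsqr (Rabs (fst z) + Rabs (snd z))).
  2: { pose proof (Rabs_pos (fst z)); pose proof (Rabs_pos (snd z)); lra. }
  apply sqrt_le_1_alt. unfold Rsqr.
  pose proof (Rabs_pos (fst z)); pose proof (Rabs_pos (snd z)).
  rewrite <- (pow2_abs (fst z)), <- (pow2_abs (snd z)). nra.
Qed.

Lemma Rabs_exp_m1 (x : R) : Rabs x <= 1 -> Rabs (exp x - 1) <= 3 * Rabs x.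
Proof.
  intros Hx.
  destruct (MVT_abs exp exp 0 x) as [c [Hc Hcb]].
  { intros c _. apply derivable_pt_lim_exp. }
  rewrite exp_0 in Hc. rewrite Hc, Rminus_0_r.
  apply Rmult_le_compat_r; [apply Rabs_pos|].
  rewrite Rabs_pos_eq by (left; apply exp_pos).
  apply Rle_trans with (exp 1); [|apply exp_le_3].
  destruct (Rle_lt_dec c 1); [|].
  - destruct r. left; apply exp_increasing; auto. subst; lra.
  - exfalso. unfold Rmin, Rmax in Hcb. apply Rabs_le_inv in Hx.
    destruct (Rle_dec 0 x); lra.
Qed.

Lemma Rabs_exp_m1_x (x : R) : Rabs x <= 1 -> Rabs (exp x - 1 - x) <= 3 * x^2.
Proof.
  intros Hx.
  destruct (MVT_abs (fun t => exp t - t) (fun t => exp t - 1) 0 x) as [c [Hc Hcb]].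
  { intros c _. apply is_derive_Reals. auto_derive; auto. ring. }
  rewrite exp_0 in Hc. replace (exp x - 1 - x) with (exp x - x - (1 - 0)) by ring.
  rewrite Hc, Rminus_0_r.
  assert (Rabs c <= Rabs x).
  { unfold Rmin, Rmax in Hcb. apply Rabs_le. apply Rabs_le_inv in Hx.
    destruct (Rle_dec 0 x).
    rewrite Rabs_pos_eq by lra; lra. rewrite Rabs_left by lra; lra. }
  pose proof (Rabs_exp_m1 c ltac:(lra)).
  rewrite <- (pow2_abs x). pose proof (Rabs_pos c). pose proof (Rabs_pos x).
  pose proof (Rabs_pos (exp c - 1)). nra.
Qed.

Lemma Rabs_sin_le (y : R) : Rabs (sin y) <= Rabs y.
Proof.
  destruct (MVT_abs sin cos 0 y) as [c [Hc _]].
  { intros c _. apply derivable_pt_lim_sin. }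
  rewrite sin_0, Rminus_0_r, Rminus_0_r in Hc. rewrite Hc.
  pose proof (COS_bound c). pose proof (Rabs_pos y).
  assert (Rabs (cos c) <= 1) by (apply Rabs_le; lra). nra.
Qed.

Lemma Rabs_cos_m1 (y : R) : Rabs (cos y - 1) <= Rabs y.
Proof.
  destruct (MVT_abs cos (fun t => - sin t) 0 y) as [c [Hc _]].
  { intros c _. apply derivable_pt_lim_cos. }
  rewrite cos_0, Rminus_0_r in Hc. rewrite Hc.
  pose proof (SIN_bound c). pose proof (Rabs_pos y).
  assert (Rabs (- sin c) <= 1) by (rewrite Rabs_Ropp; apply Rabs_le; lra). nra.
Qed.

Lemma Rabs_cos_m1' (y : R) : Rabs (cos y - 1) <= y^2.
Proof.
  destruct (MVT_abs cos (fun t => - sin t) 0 y) as [c [Hc Hcb]].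
  { intros c _. apply derivable_pt_lim_cos. }
  rewrite cos_0, Rminus_0_r in Hc. rewrite Hc, Rabs_Ropp.
  assert (Rabs c <= Rabs y).
  { unfold Rmin, Rmax in Hcb. apply Rabs_le.
    destruct (Rle_dec 0 y).
    rewrite Rabs_pos_eq by lra; lra. rewrite Rabs_left by lra; lra. }
  pose proof (Rabs_sin_le c). rewrite <- (pow2_abs y).
  pose proof (Rabs_pos y). pose proof (Rabs_pos (sin c)). nra.
Qed.

Lemma Rabs_sin_m_x (y : R) : Rabs (sin y - y) <= y^2.
Proof.
  destruct (MVT_abs (fun t => sin t - t) (fun t => cos t - 1) 0 y) as [c [Hc Hcb]].
  { intros c _. apply is_derive_Reals. auto_derive; auto. ring. }
  replace (sin y - y) with ((sin y - y) - (sin 0 - 0)) by (rewrite sin_0; ring).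
  rewrite Hc. replace (y - 0) with y by ring.
  assert (Rabs c <= Rabs y).
  { unfold Rmin, Rmax in Hcb. apply Rabs_le.
    destruct (Rle_dec 0 y).
    rewrite Rabs_pos_eq by lra; lra. rewrite Rabs_left by lra; lra. }
  pose proof (Rabs_cos_m1 c). rewrite <- (pow2_abs y).
  pose proof (Rabs_pos y). pose proof (Rabs_pos (cos c - 1)). nra.
Qed.

Lemma cexp_plus (z w : C) : cexp (Cplus z w) = Cmult (cexp z) (cexp w).
Proof.
  destruct z as [x y]; destruct w as [u v]. unfold cexp, Cplus, Cmult; simpl.
  rewrite exp_plus, cos_plus, sin_plus.
  apply injective_projections; simpl; ring.
Qed.

Lemma Cmod_cexp (z : C) : Cmod (cexp z) = exp (fst z).
Proof.
  destruct z as [x y]. unfold cexp, Cmod, Re, Im; cbn [fst snd].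
  replace ((exp x * cos y) ^ 2 + (exp x * sin y) ^ 2) with (exp x ^ 2).
  - apply sqrt_pow2. left; apply exp_pos.
  - pose proof (sin2_cos2 y). unfold Rsqr in H. nra.
Qed.

Lemma cexp_small (h : C) : Cmod h <= 1 ->
  Cmod (Cminus (Cminus (cexp h) (RtoC 1)) h) <= 10 * (Cmod h)^2.
Proof.
  intros Hh. destruct h as [x y].
  assert (Hx : Rabs x <= Cmod (x,y)) by (apply (re_le_Cmod (x,y))).
  assert (Hy : Rabs y <= Cmod (x,y)).
  { pose proof (Rmax_Cmod (x,y)). simpl in H. pose proof (Rmax_r (Rabs x) (Rabs y)). lra. }
  replace (Cminus (Cminus (cexp (x,y)) (RtoC 1)) (x,y)) with
    ((exp x * cos y - 1 - x, exp x * sin y - y) : C)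
    by (unfold cexp, Cminus, Cplus, Copp, RtoC, Re, Im; apply injective_projections; simpl; ring).
  eapply Rle_trans; [apply Cmod_le_ReIm|]. cbn [fst snd].
  set (c := Cmod (x,y)) in *.
  pose proof (Rabs_exp_m1 x ltac:(lra)).
  pose proof (Rabs_exp_m1_x x ltac:(lra)).
  pose proof (Rabs_cos_m1' y). pose proof (Rabs_sin_m_x y).
  pose proof (Rabs_sin_le y).
  assert (He : exp x <= 3).
  { apply Rle_trans with (exp 1); [|apply exp_le_3].
    apply Rabs_le_inv in Hx. destruct (Rle_lt_dec x 1) as [[|]|]; try lra.
    left; apply exp_increasing; auto. subst; lra. }
  pose proof (exp_pos x).
  replace (exp x * cos y - 1 - x) with ((exp x - 1 - x) + exp x * (cos y - 1)) by ring.
  replace (exp x * sin y - y) with ((exp x - 1) * sin y + (sin y - y)) by ring.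
  eapply Rle_trans. apply Rplus_le_compat; apply Rabs_triang.
  rewrite !Rabs_mult. rewrite (Rabs_pos_eq (exp x)) by lra.
  pose proof (Rabs_pos (cos y - 1)). pose proof (Rabs_pos (sin y)).
  pose proof (Rabs_pos (exp x - 1)). pose proof (Rabs_pos x). pose proof (Rabs_pos y).
  rewrite <- (pow2_abs x) in *. rewrite <- (pow2_abs y) in *.
  assert (exp x * Rabs (cos y - 1) <= 3 * Rabs y ^ 2) by nra.
  assert (Rabs (exp x - 1) * Rabs (sin y) <= 3 * Rabs x * Rabs y) by nra.
  nra.
Qed.

Ltac minle := solve [ apply Rle_refl | eapply Rle_trans; [apply Rmin_l|]; minle | eapply Rle_trans; [apply Rmin_r|]; minle ].
Ltac minlt H := eapply Rlt_le_trans; [apply H| minle].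

Definition hasD (f : C -> C) (z d : C) : Prop :=
  forall eps, 0 < eps -> exists del, 0 < del /\ forall w, Cmod (w - z)%C < del ->
    Cmod (f w - f z - d * (w - z))%C <= eps * Cmod (w - z)%C.

Lemma hasD_ext (f g : C -> C) z d : (forall w, f w = g w) -> hasD f z d -> hasD g z d.
Proof.
  intros E H eps He. destruct (H eps He) as [del [Hd H1]]. exists del; split; auto.
  intros w Hw. rewrite <- !E. auto.
Qed.

Lemma hasD_lip f z d : hasD f z d -> exists del, 0 < del /\ forall w, Cmod (w - z)%C < del ->
  Cmod (f w - f z)%C <= (Cmod d + 1) * Cmod (w - z)%C.
Proof.
  intros H. destruct (H 1 Rlt_0_1) as [del [Hd H1]]. exists del; split; auto.
  intros w Hw. specialize (H1 w Hw).
  replace (f w - f z)%C with ((f w - f z - d * (w - z)) + d * (w - z))%C by ring.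
  eapply Rle_trans; [apply Cmod_triangle|]. rewrite Cmod_mult. lra.
Qed.

Lemma hasD_affine (al be z : C) : hasD (fun w => al * w + be)%C z al.
Proof.
  intros eps He. exists 1; split; [lra|]. intros w _.
  replace (al * w + be - (al * z + be) - al * (w - z))%C with (RtoC 0) by ring.
  rewrite Cmod_0. pose proof (Cmod_ge_0 (w - z)%C). nra.
Qed.

Lemma hasD_mult f g z df dg : hasD f z df -> hasD g z dg ->
  hasD (fun w => f w * g w)%C z (df * g z + f z * dg)%C.
Proof.
  intros Hf Hg eps He.
  set (A := Cmod (g z) + Cmod dg + 1).
  set (B := Cmod (f z) + 1).
  set (D := (Cmod df + 1) * (Cmod dg + 1)).
  assert (HA : 0 < A) by (unfold A; pose proof (Cmod_ge_0 (g z)); pose proof (Cmod_ge_0 dg); lra).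
  assert (HB : 0 < B) by (unfold B; pose proof (Cmod_ge_0 (f z)); lra).
  assert (HD : 0 < D) by (unfold D; pose proof (Cmod_ge_0 df); pose proof (Cmod_ge_0 dg); nra).
  destruct (Hf (eps / (3 * A))) as [d1 [Hd1 H1]]. { apply Rdiv_lt_0_compat; lra. }
  destruct (Hg (eps / (3 * B))) as [d2 [Hd2 H2]]. { apply Rdiv_lt_0_compat; lra. }
  destruct (hasD_lip g z dg Hg) as [d3 [Hd3 H3]].
  exists (Rmin (Rmin d1 d2) (Rmin d3 (Rmin 1 (eps / (3 * D))))).
  split. { repeat apply Rmin_pos; auto; try lra. apply Rdiv_lt_0_compat; lra. }
  intros w Hw.
  assert (Hw1 : Cmod (w - z)%C < d1) by minlt Hw.
  assert (Hw2 : Cmod (w - z)%C < d2) by minlt Hw.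
  assert (Hw3 : Cmod (w - z)%C < d3) by minlt Hw.
  assert (Hw4 : Cmod (w - z)%C < 1) by minlt Hw.
  assert (Hw5 : Cmod (w - z)%C < eps / (3 * D)) by minlt Hw.
  specialize (H1 w Hw1). specialize (H2 w Hw2). specialize (H3 w Hw3).
  replace (f w * g w - f z * g z - (df * g z + f z * dg) * (w - z))%C with
    ((f w - f z - df * (w - z)) * g w + f z * (g w - g z - dg * (w - z))
      + df * (w - z) * (g w - g z))%C by ring.
  set (h := Cmod (w - z)%C) in *.
  assert (Hh : 0 <= h) by apply Cmod_ge_0.
  assert (Hgw : Cmod (g w) <= A).
  { replace (g w) with (g z + (g w - g z))%C by ring.
    eapply Rle_trans; [apply Cmod_triangle|]. unfold A.
    pose proof (Cmod_ge_0 dg). nra. }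
  eapply Rle_trans; [apply Cmod_triangle|].
  eapply Rle_trans; [apply Rplus_le_compat_r; apply Cmod_triangle|].
  rewrite !Cmod_mult. fold h.
  pose proof (Cmod_ge_0 (f w - f z - df * (w - z))%C).
  pose proof (Cmod_ge_0 (g w - g z - dg * (w - z))%C).
  pose proof (Cmod_ge_0 (g w)). pose proof (Cmod_ge_0 (f z)).
  pose proof (Cmod_ge_0 df). pose proof (Cmod_ge_0 dg).
  assert (T1 : Cmod (f w - f z - df * (w - z))%C * Cmod (g w) <= eps / 3 * h).
  { apply Rle_trans with (eps / (3 * A) * h * A). apply Rmult_le_compat; auto.
    right. field. lra. }
  assert (T2 : Cmod (f z) * Cmod (g w - g z - dg * (w - z))%C <= eps / 3 * h).
  { apply Rle_trans with (B * (eps / (3 * B) * h)). apply Rmult_le_compat; auto. unfold B; lra.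
    right. field. lra. }
  assert (T3 : Cmod df * h * Cmod (g w - g z)%C <= eps / 3 * h).
  { pose proof (Cmod_ge_0 (g w - g z)%C).
    assert (S1 : Cmod df * h * Cmod (g w - g z)%C <= (Cmod df + 1) * h * ((Cmod dg + 1) * h)).
    { apply Rmult_le_compat; try nra. }
    assert (S2 : h * h <= h * (eps / (3 * D))) by nra.
    assert (E : (Cmod df + 1) * (Cmod dg + 1) * (eps / (3 * D)) = eps/3) by (unfold D; field; nra).
    assert (S3 : (Cmod df + 1) * h * ((Cmod dg + 1) * h) = (Cmod df + 1) * (Cmod dg + 1) * (h * h)) by ring.
    assert (S4 : (Cmod df + 1) * (Cmod dg + 1) * (h * h) <= (Cmod df + 1) * (Cmod dg + 1) * (h * (eps / (3 * D)))).
    { apply Rmult_le_compat_l; nra. }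
    replace ((Cmod df + 1) * (Cmod dg + 1) * (h * (eps / (3 * D)))) with (eps / 3 * h) in S4 by (rewrite <- E; ring).
    lra. }
  lra.
Qed.

Lemma hasD_comp f h z df dh : hasD f z df -> hasD h (f z) dh ->
  hasD (fun w => h (f w)) z (dh * df)%C.
Proof.
  intros Hf Hh eps He.
  pose proof (Cmod_ge_0 df) as Gdf. pose proof (Cmod_ge_0 dh) as Gdh.
  destruct (Hh (eps / (2 * (Cmod df + 1)))) as [d1 [Hd1 H1]]. { apply Rdiv_lt_0_compat; lra. }
  destruct (Hf (eps / (2 * (Cmod dh + 1)))) as [d2 [Hd2 H2]]. { apply Rdiv_lt_0_compat; lra. }
  destruct (hasD_lip f z df Hf) as [d3 [Hd3 H3]].
  exists (Rmin (Rmin d2 d3) (d1 / (Cmod df + 1))). split.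
  { repeat apply Rmin_pos; auto. apply Rdiv_lt_0_compat; lra. }
  intros w Hw.
  assert (Hw2 : Cmod (w - z)%C < d2) by minlt Hw.
  assert (Hw3 : Cmod (w - z)%C < d3) by minlt Hw.
  assert (Hw1 : Cmod (w - z)%C < d1 / (Cmod df + 1)) by minlt Hw.
  specialize (H2 w Hw2). specialize (H3 w Hw3).
  set (k := Cmod (w - z)%C) in *. assert (Hk : 0 <= k) by apply Cmod_ge_0.
  assert (Hfw : Cmod (f w - f z)%C < d1).
  { apply Rle_lt_trans with ((Cmod df + 1) * k); auto.
    apply Rmult_lt_reg_l with (/ (Cmod df + 1)). apply Rinv_0_lt_compat; lra.
    rewrite <- Rmult_assoc, Rinv_l, Rmult_1_l by lra. rewrite Rmult_comm. exact Hw1. }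
  specialize (H1 (f w) Hfw).
  replace (h (f w) - h (f z) - dh * df * (w - z))%C with
    ((h (f w) - h (f z) - dh * (f w - f z)) + dh * (f w - f z - df * (w - z)))%C by ring.
  eapply Rle_trans; [apply Cmod_triangle|]. rewrite Cmod_mult.
  pose proof (Cmod_ge_0 (f w - f z)%C).
  assert (T1 : eps / (2 * (Cmod df + 1)) * Cmod (f w - f z)%C <= eps / 2 * k).
  { apply Rle_trans with (eps / (2 * (Cmod df + 1)) * ((Cmod df + 1) * k)).
    apply Rmult_le_compat_l; auto. left; apply Rdiv_lt_0_compat; lra.
    right; field; lra. }
  assert (T2 : Cmod dh * Cmod (f w - f z - df * (w - z))%C <= eps / 2 * k).
  { apply Rle_trans with ((Cmod dh + 1) * (eps / (2 * (Cmod dh + 1)) * k)).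
    apply Rmult_le_compat; try lra. apply Cmod_ge_0.
    right; field; lra. }
  lra.
Qed.

Lemma hasD_Cinv (u : C) : u <> RtoC 0 -> hasD Cinv u (- (/ (u * u)))%C.
Proof.
  intros Hu eps He.
  assert (Hm : 0 < Cmod u) by (apply Cmod_gt_0; auto).
  exists (Rmin (Cmod u / 2) (eps * (Cmod u)^3 / 2)). split.
  { apply Rmin_pos. lra. apply Rdiv_lt_0_compat; [|lra]. apply Rmult_lt_0_compat; auto. apply pow_lt; auto. }
  intros w Hw.
  assert (Hw1 : Cmod (w - u)%C < Cmod u / 2) by minlt Hw.
  assert (Hw2 : Cmod (w - u)%C < eps * (Cmod u)^3 / 2) by minlt Hw.
  assert (Hwm : Cmod u / 2 <= Cmod w).
  { replace u with (w - (w - u))%C in Hw1 |- * at 1 by ring.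
    pose proof (Cmod_triangle w (- (w - u))%C). rewrite Cmod_opp in H.
    replace (w + - (w - u))%C with (w - (w - u))%C in H by ring.
    assert (Cmod (w - (w - u))%C <= Cmod w + Cmod (w - u)%C) by exact H.
    replace (w - (w - u))%C with u in * by ring. lra. }
  assert (Hw0 : w <> RtoC 0).
  { intro E. rewrite E, Cmod_0 in Hwm. lra. }
  replace (/ w - / u - - / (u * u) * (w - u))%C with ((w - u) * (w - u) / (u * u * w))%C
    by (field; auto).
  unfold Cdiv. rewrite !Cmod_mult, Cmod_inv, !Cmod_mult.
  2: { intro E. apply (f_equal Cmod) in E. rewrite Cmod_0, !Cmod_mult in E.
       assert (0 < Cmod w) by lra. assert (0 < Cmod u * Cmod u * Cmod w) by (repeat apply Rmult_lt_0_compat; auto). lra. }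
  set (k := Cmod (w - u)%C) in *. assert (Hk : 0 <= k) by apply Cmod_ge_0.
  assert (Hpos : 0 < Cmod u * Cmod u * Cmod w) by (repeat apply Rmult_lt_0_compat; lra).
  apply Rle_trans with (k * k * / (Cmod u * Cmod u * (Cmod u / 2))).
  { apply Rmult_le_compat_l. nra. apply Rinv_le_contravar. apply Rmult_lt_0_compat; nra.
    apply Rmult_le_compat_l; nra. }
  replace (k * k * / (Cmod u * Cmod u * (Cmod u / 2))) with (k * (2 * k / (Cmod u)^3)) by (field; lra).
  rewrite Rmult_comm. apply Rmult_le_compat_r; auto.
  apply Rmult_le_reg_r with (Cmod u ^ 3). apply pow_lt; auto.
  unfold Rdiv. rewrite Rmult_assoc, Rinv_l, Rmult_1_r. lra. apply pow_nonzero; lra.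
Qed.

Lemma hasD_cexp (z : C) : hasD cexp z (cexp z).
Proof.
  intros eps He.
  set (E := Cmod (cexp z)). assert (HE : 0 <= E) by apply Cmod_ge_0.
  exists (Rmin 1 (eps / (10 * E + 1))). split.
  { apply Rmin_pos. lra. apply Rdiv_lt_0_compat; lra. }
  intros w Hw.
  assert (Hw1 : Cmod (w - z)%C < 1) by minlt Hw.
  assert (Hw2 : Cmod (w - z)%C < eps / (10 * E + 1)) by minlt Hw.
  replace (cexp w) with (cexp z * cexp (w - z))%C
    by (rewrite <- cexp_plus; f_equal; ring).
  replace (cexp z * cexp (w - z) - cexp z - cexp z * (w - z))%C with
    (cexp z * (cexp (w - z) - RtoC 1 - (w - z)))%C by ring.
  rewrite Cmod_mult. fold E.
  pose proof (cexp_small (w - z)%C ltac:(lra)).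
  set (k := Cmod (w - z)%C) in *. assert (Hk : 0 <= k) by apply Cmod_ge_0.
  apply Rle_trans with (E * (10 * k ^ 2)). apply Rmult_le_compat_l; auto.
  apply Rle_trans with (k * ((10 * E + 1) * k)). nra.
  rewrite Rmult_comm. apply Rmult_le_compat_r; auto.
  assert (k * (10 * E + 1) < eps).
  { apply Rmult_lt_reg_r with (/ (10 * E + 1)). apply Rinv_0_lt_compat; lra.
    rewrite Rmult_assoc, Rinv_r, Rmult_1_r by lra. exact Hw2. }
  lra.
Qed.

Lemma fst_RtoC_mult (t : R) (x : C) : fst (RtoC t * x)%C = t * fst x.
Proof. destruct x; simpl; ring. Qed.
Lemma snd_RtoC_mult (t : R) (x : C) : snd (RtoC t * x)%C = t * snd x.
Proof. destruct x; simpl; ring. Qed.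
Lemma fst_minus (x y : C) : fst (x - y)%C = fst x - fst y.
Proof. destruct x, y; simpl; ring. Qed.
Lemma snd_minus (x y : C) : snd (x - y)%C = snd x - snd y.
Proof. destruct x, y; simpl; ring. Qed.
Lemma Rabs_fst_le (x : C) : Rabs (fst x) <= Cmod x.
Proof. apply (re_le_Cmod x). Qed.
Lemma Rabs_snd_le (x : C) : Rabs (snd x) <= Cmod x.
Proof. pose proof (Rmax_Cmod x). pose proof (Rmax_r (Rabs (fst x)) (Rabs (snd x))). lra. Qed.

Lemma hasD_line_deriv (h : C -> C) (c v : C) (t : R) (d : C) (comp : C -> R)
  (Hlin : forall (s : R) (x : C), comp (RtoC s * x)%C = s * comp x)
  (Hmin : forall x y, comp (x - y)%C = comp x - comp y)
  (Hle : forall x, Rabs (comp x) <= Cmod x) :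
  hasD h (c + RtoC t * v)%C d ->
  derivable_pt_lim (fun s => comp (h (c + RtoC s * v)%C)) t (comp (d * v)%C).
Proof.
  intros H eps He.
  assert (Hv : 0 <= Cmod v) by apply Cmod_ge_0.
  destruct (H (eps / (2 * (Cmod v + 1)))) as [d0 [Hd0 H0]]. { apply Rdiv_lt_0_compat; lra. }
  assert (Hdp : 0 < d0 / (Cmod v + 1)) by (apply Rdiv_lt_0_compat; lra).
  exists (mkposreal _ Hdp). intros tau Htau Hlt. simpl in Hlt.
  assert (Heq : (c + RtoC (t + tau) * v - (c + RtoC t * v))%C = (RtoC tau * v)%C).
  { rewrite RtoC_plus. ring. }
  assert (Hm : Cmod (c + RtoC (t + tau) * v - (c + RtoC t * v))%C < d0).
  { rewrite Heq, Cmod_mult, Cmod_R.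
    apply Rle_lt_trans with (Rabs tau * (Cmod v + 1)). pose proof (Rabs_pos tau); nra.
    apply Rmult_lt_reg_r with (/ (Cmod v + 1)). apply Rinv_0_lt_compat; lra.
    rewrite Rmult_assoc, Rinv_r, Rmult_1_r by lra. exact Hlt. }
  specialize (H0 _ Hm). rewrite Heq in H0.
  rewrite Cmod_mult, Cmod_R in H0.
  set (X := (h (c + RtoC (t + tau) * v) - h (c + RtoC t * v) - d * (RtoC tau * v))%C) in H0.
  assert (HX : comp (h (c + RtoC (t + tau) * v)%C) - comp (h (c + RtoC t * v)%C) - tau * comp (d * v)%C = comp X).
  { unfold X. rewrite !Hmin. replace (d * (RtoC tau * v))%C with (RtoC tau * (d * v))%C by ring. rewrite Hlin. ring. }
  assert (Htp : 0 < Rabs tau) by (apply Rabs_pos_lt; auto).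
  replace ((comp (h (c + RtoC (t + tau) * v)%C) - comp (h (c + RtoC t * v)%C)) / tau - comp (d * v)%C)
    with (comp X / tau) by (rewrite <- HX; field; auto).
  unfold Rdiv. rewrite Rabs_mult, Rabs_inv.
  apply Rle_lt_trans with (eps / (2 * (Cmod v + 1)) * Cmod v).
  { apply Rmult_le_reg_r with (Rabs tau); auto.
    rewrite Rmult_assoc, Rinv_l, Rmult_1_r by lra.
    eapply Rle_trans; [apply Hle|]. lra. }
  apply Rle_lt_trans with (eps / 2). 
  { unfold Rdiv. rewrite Rinv_mult. 
    apply Rle_trans with (eps * / 2 * (/ (Cmod v + 1) * Cmod v)). right; ring.
    rewrite <- (Rmult_1_r (eps */2)) at 2. apply Rmult_le_compat_l. lra.
    apply Rmult_le_reg_l with (Cmod v + 1). lra.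
    rewrite <- Rmult_assoc, Rinv_r by lra. lra. }
  lra.
Qed.

Lemma C_MVT (h dh : C -> C) (c w : C) (B : R) :
  (forall t, 0 <= t <= 1 -> hasD h (c + RtoC t * (w - c))%C (dh (c + RtoC t * (w - c))%C)) ->
  (forall t, 0 <= t <= 1 -> Cmod (dh (c + RtoC t * (w - c))%C) <= B) ->
  Cmod (h w - h c)%C <= 2 * B * Cmod (w - c)%C.
Proof.
  intros HD HB. set (v := (w - c)%C).
  assert (Hp1 : (c + RtoC 1 * v)%C = w) by (unfold v; ring).
  assert (Hp0 : (c + RtoC 0 * v)%C = c) by (unfold v; ring).
  assert (Hcomp : forall comp : C -> R,
    (forall (s : R) (x : C), comp (RtoC s * x)%C = s * comp x) ->
    (forall x y, comp (x - y)%C = comp x - comp y) ->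
    (forall x, Rabs (comp x) <= Cmod x) ->
    Rabs (comp (h w) - comp (h c)) <= B * Cmod v).
  { intros comp Hl Hm Hle.
    destruct (MVT_abs (fun s => comp (h (c + RtoC s * v)%C)) (fun s => comp (dh (c + RtoC s * v) * v)%C) 0 1)
      as [t [Ht Htb]].
    { intros t Htb. rewrite Rmin_left, Rmax_right in Htb by lra.
      apply hasD_line_deriv; auto. }
    rewrite Hp1, Hp0 in Ht. rewrite Ht. rewrite Rmin_left, Rmax_right in Htb by lra.
    replace (1 - 0) with 1 by ring. rewrite Rabs_R1, Rmult_1_r.
    eapply Rle_trans; [apply Hle|]. rewrite Cmod_mult. apply Rmult_le_compat_r.
    apply Cmod_ge_0. apply HB; auto. }
  pose proof (Hcomp fst fst_RtoC_mult fst_minus Rabs_fst_le).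
  pose proof (Hcomp snd snd_RtoC_mult snd_minus Rabs_snd_le).
  eapply Rle_trans; [apply Cmod_le_ReIm|]. rewrite fst_minus, snd_minus. lra.
Qed.

Definition Clim (u : nat -> C) : C :=
  (real (Lim_seq (fun n => fst (u n))), real (Lim_seq (fun n => snd (u n)))).

Lemma Rlim_cauchy (u : nat -> R) :
  (forall eps, 0 < eps -> exists M, forall m n, (M <= m)%nat -> (M <= n)%nat -> Rabs (u m - u n) <= eps) ->
  forall eps, 0 < eps -> exists M, forall n, (M <= n)%nat -> Rabs (u n - real (Lim_seq u)) < eps.
Proof.
  intros H.
  assert (Hc : ex_lim_seq_cauchy u).
  { intros eps. destruct (H (eps / 2)) as [M HM]. destruct eps; simpl; lra.
    exists M. intros n m Hn Hm. specialize (HM n m Hn Hm). destruct eps; simpl in *; lra. }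
  apply ex_lim_seq_cauchy_corr in Hc. destruct Hc as [l Hl].
  rewrite (is_lim_seq_unique _ _ Hl). simpl.
  apply is_lim_seq_spec in Hl. intros eps He. destruct (Hl (mkposreal _ He)) as [M HM].
  exists M. intros n Hn. apply HM; auto.
Qed.

Lemma Clim_correct (u : nat -> C) :
  (forall eps, 0 < eps -> exists M, forall m n, (M <= m)%nat -> (M <= n)%nat -> Cmod (u m - u n)%C <= eps) ->
  forall eps, 0 < eps -> exists M, forall n, (M <= n)%nat -> Cmod (u n - Clim u)%C < eps.
Proof.
  intros H eps He.
  assert (H1 : forall comp : C -> R, (forall x y, comp (x - y)%C = comp x - comp y) ->
      (forall x, Rabs (comp x) <= Cmod x) ->
      forall eps, 0 < eps -> exists M, forall n, (M <= n)%nat -> Rabs (comp (u n) - real (Lim_seq (fun k => comp (u k)))) < eps).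
  { intros comp Hm Hle. apply Rlim_cauchy. intros e He'. destruct (H e He') as [M HM].
    exists M. intros m n Hm' Hn'. rewrite <- Hm. eapply Rle_trans; [apply Hle|]. auto. }
  destruct (H1 fst fst_minus Rabs_fst_le (eps/2)) as [M1 HM1]; [lra|].
  destruct (H1 snd snd_minus Rabs_snd_le (eps/2)) as [M2 HM2]; [lra|].
  exists (max M1 M2). intros n Hn.
  eapply Rle_lt_trans; [apply Cmod_le_ReIm|]. rewrite fst_minus, snd_minus. unfold Clim; simpl.
  specialize (HM1 n ltac:(lia)). specialize (HM2 n ltac:(lia)). lra.
Qed.

Lemma Cseq_filterlim (u : nat -> C) (L : C) :
  (forall eps, 0 < eps -> exists M, forall n, (M <= n)%nat -> Cmod (u n - L)%C < eps) ->
  filterlim u eventually (locally L).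
Proof.
  intros H P [eps HP]. destruct (H eps (cond_pos eps)) as [M HM].
  exists M. intros n Hn. apply HP. apply C_NormedModule_mixin_compat1. apply HM; auto.
Qed.

Lemma hasD_holo (F : C -> C) (c g : C) : hasD F c g -> C_holomorphic_at F c.
Proof.
  intros H. exists g. split.
  { apply is_linear_scal_l. }
  intros x Hx. apply (@is_filter_lim_locally_unique _ (AbsRing_NormedModule C_AbsRing)) in Hx. subst x.
  intros eps. destruct (H eps (cond_pos eps)) as [del [Hd Hdel]].
  exists (mkposreal _ Hd). intros y Hy.
  change (Cmod (y - c)%C < del) in Hy.
  specialize (Hdel y Hy). change (norm (minus y c)) with (Cmod (y - c)%C). change (norm (minus (minus (F y) (F c)) (scal (minus y c) g))) with (Cmod (F y - F c - (y - c) * g)%C).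
  rewrite Cmult_comm. exact Hdel.
Qed.

Lemma hasD_minus f g z df dg : hasD f z df -> hasD g z dg ->
  hasD (fun w => f w - g w)%C z (df - dg)%C.
Proof.
  intros Hf Hg eps He.
  destruct (Hf (eps/2)) as [d1 [Hd1 H1]]; [lra|].
  destruct (Hg (eps/2)) as [d2 [Hd2 H2]]; [lra|].
  exists (Rmin d1 d2). split. apply Rmin_pos; auto.
  intros w Hw.
  assert (Hw1 : Cmod (w - z)%C < d1) by minlt Hw.
  assert (Hw2 : Cmod (w - z)%C < d2) by minlt Hw.
  specialize (H1 w Hw1). specialize (H2 w Hw2).
  replace (f w - g w - (f z - g z) - (df - dg) * (w - z))%C with
    ((f w - f z - df * (w - z)) + - (g w - g z - dg * (w - z)))%C by ring.
  eapply Rle_trans; [apply Cmod_triangle|]. rewrite Cmod_opp. lra.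
Qed.

Lemma Cmod_tri4 (a b c d : C) : Cmod (a + b + c + d)%C <= Cmod a + Cmod b + Cmod c + Cmod d.
Proof.
  eapply Rle_trans; [apply Cmod_triangle|]. apply Rplus_le_compat_r.
  eapply Rle_trans; [apply Cmod_triangle|]. apply Rplus_le_compat_r.
  apply Cmod_triangle.
Qed.

Lemma lim_hasD (f d : nat -> C -> C) (F : C -> C) (c : C) (r : R) :
  0 < r ->
  (forall n z, Cmod (z - c)%C < r -> hasD (f n) z (d n z)) ->
  (forall z, Cmod (z - c)%C < r -> forall eps, 0 < eps -> exists M, forall n, (M <= n)%nat -> Cmod (f n z - F z)%C < eps) ->
  (forall eps, 0 < eps -> exists M, forall m n z, (M <= m)%nat -> (M <= n)%nat -> Cmod (z - c)%C < r -> Cmod (d m z - d n z)%C <= eps) ->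
  hasD F c (Clim (fun n => d n c)).
Proof.
  intros Hr Hder Hpt Hunif eps He.
  set (g := Clim (fun n => d n c)). set (e1 := eps / 5).
  assert (He1 : 0 < e1) by (unfold e1; lra).
  assert (Hc0 : Cmod (c - c)%C < r) by (replace (c - c)%C with (RtoC 0) by ring; rewrite Cmod_0; lra).
  destruct (Hunif e1 He1) as [M1 HM1].
  destruct (Clim_correct (fun n => d n c)) with (eps := e1) as [M2 HM2]; auto.
  { intros e He'. destruct (Hunif e He') as [M HM]. exists M. intros m n Hm Hn. apply HM; auto. }
  set (M := max M1 M2).
  destruct (Hder M c Hc0 e1 He1) as [d0 [Hd0 H0]].
  exists (Rmin d0 r). split. apply Rmin_pos; auto.
  intros w Hw.
  assert (Hw0 : Cmod (w - c)%C < d0) by minlt Hw.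
  assert (Hwr : Cmod (w - c)%C < r) by minlt Hw.
  set (k := Cmod (w - c)%C) in *. assert (Hk : 0 <= k) by apply Cmod_ge_0.
  assert (Hball : forall t, 0 <= t <= 1 -> Cmod (c + RtoC t * (w - c) - c)%C < r).
  { intros t Ht. replace (c + RtoC t * (w - c) - c)%C with (RtoC t * (w - c))%C by ring.
    rewrite Cmod_mult, Cmod_R, Rabs_pos_eq by lra. fold k. nra. }
  assert (HA : forall n, (M <= n)%nat ->
    Cmod ((f n w - f M w) - (f n c - f M c))%C <= 2 * e1 * k).
  { intros n Hn.
    apply (C_MVT (fun z => f n z - f M z)%C (fun z => d n z - d M z)%C c w e1).
    - intros t Ht. apply hasD_minus; apply Hder; auto.
    - intros t Ht. apply HM1; auto; lia. }
  apply Rle_plus_epsilon. intros eta Heta.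
  destruct (Hpt w Hwr (eta/2)) as [Nw HNw]; [lra|].
  destruct (Hpt c Hc0 (eta/2)) as [Nc HNc]; [lra|].
  set (n := max M (max Nw Nc)).
  specialize (HA n ltac:(unfold n; lia)). specialize (HNw n ltac:(unfold n; lia)).
  specialize (HNc n ltac:(unfold n; lia)). specialize (H0 w Hw0).
  specialize (HM2 M ltac:(unfold M; lia)). fold g in HM2.
  replace (F w - F c - g * (w - c))%C with
    ((- (f n w - F w) + (f n c - F c)) + ((f n w - f M w) - (f n c - f M c))
     + (f M w - f M c - d M c * (w - c)) + (d M c - g) * (w - c))%C by ring.
  eapply Rle_trans; [apply Cmod_tri4|].
  assert (T1 : Cmod (- (f n w - F w) + (f n c - F c))%C <= eta).
  { eapply Rle_trans; [apply Cmod_triangle|]. rewrite Cmod_opp. lra. }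
  rewrite Cmod_mult. fold k.
  fold k in H0. assert (T2 : Cmod (d M c - g)%C * k <= e1 * k) by (apply Rmult_le_compat_r; lra).
  assert (E4 : e1 * k * 5 = eps * k) by (unfold e1; field). nra.
Qed.

Lemma exp_le (x y : R) : x <= y -> exp x <= exp y.
Proof. intros [H|H]. left; apply exp_increasing; auto. subst; lra. Qed.

Lemma ln_le (x y : R) : 0 < x -> x <= y -> ln x <= ln y.
Proof. intros Hx [H|H]. left; apply ln_increasing; auto. subst; lra. Qed.

Lemma ln_ge0 (t : R) : 1 <= t -> 0 <= ln t.
Proof. intros H. rewrite <- ln_1. apply ln_le; lra. Qed.

Lemma ln_le_exp (eta L : R) : 0 < eta -> L <= exp (eta * L) / eta.
Proof.
  intros He. pose proof (exp_ineq1_le (eta * L)).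
  apply Rmult_le_reg_l with eta; auto. unfold Rdiv.
  rewrite <- Rmult_assoc, (Rmult_comm eta (exp _)), Rmult_assoc, Rinv_r, Rmult_1_r by lra. lra.
Qed.

Definition phi (eta t : R) : R := exp (- eta * ln t).

Lemma phi_pos eta t : 0 < phi eta t.
Proof. apply exp_pos. Qed.

Lemma phi_le1 eta t : 0 <= eta -> 1 <= t -> phi eta t <= 1.
Proof. intros. unfold phi. rewrite <- exp_0. apply exp_le. pose proof (ln_ge0 t H0). nra. Qed.

Lemma phi_anti eta t1 t2 : 0 <= eta -> 0 < t1 -> t1 <= t2 -> phi eta t2 <= phi eta t1.
Proof. intros. unfold phi. apply exp_le. pose proof (ln_le t1 t2 H0 H1). nra. Qed.

Lemma drop (f f' p p' : R -> R) (a b C : R) : a <= b ->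
  (forall t, a <= t <= b -> derivable_pt_lim f t (f' t)) ->
  (forall t, a <= t <= b -> derivable_pt_lim p t (p' t)) ->
  (forall t, a <= t <= b -> Rabs (f' t) <= - C * p' t) ->
  Rabs (f b - f a) <= C * (p a - p b).
Proof.
  intros [Hab|Hab] Hf Hp Hb; [|subst; replace (f b - f b) with 0 by ring; rewrite Rabs_R0; lra].
  destruct (MVT_cor2 (fun t => f t + C * p t) (fun t => f' t + C * p' t) a b Hab) as [c1 [H1 Hc1]].
  { intros t Ht. apply derivable_pt_lim_plus; auto. apply derivable_pt_lim_scal. auto. }
  destruct (MVT_cor2 (fun t => C * p t - f t) (fun t => C * p' t - f' t) a b Hab) as [c2 [H2 Hc2]].
  { intros t Ht. apply derivable_pt_lim_minus; auto. apply derivable_pt_lim_scal. auto. }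
  assert (B1 := Hb c1 ltac:(lra)). assert (B2 := Hb c2 ltac:(lra)).
  apply Rabs_le_inv in B1. apply Rabs_le_inv in B2.
  apply Rabs_le. split; nra.
Qed.

Lemma derivable_phi eta t : 0 < t -> derivable_pt_lim (phi eta) t (- eta * phi eta t / t).
Proof.
  intros Ht. apply is_derive_Reals. unfold phi. auto_derive. auto. field. lra.
Qed.

Lemma drop1 eta t : 0 < eta -> 2 <= t -> exp (- (1 + eta) * ln t) <= (phi eta (t - 1) - phi eta t) / eta.
Proof.
  intros He Ht.
  assert (Hd : forall x, t - 1 <= x <= t -> derivable_pt_lim (phi eta) x (- eta * phi eta x / x)).
  { intros x Hx. apply derivable_phi. lra. }
  destruct (MVT_cor2 (phi eta) (fun x => - eta * phi eta x / x) (t - 1) t ltac:(lra) Hd) as [c [H1 Hc]].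
  replace (t - (t - 1)) with 1 in H1 by ring.
  assert (E : phi eta (t - 1) - phi eta t = eta * (phi eta c / c)) by (rewrite <- (Ropp_involutive (phi eta (t-1) - phi eta t)), Ropp_minus_distr, H1; field; lra).
  rewrite E. replace (eta * (phi eta c / c) / eta) with (phi eta c / c) by (field; lra).
  unfold phi. replace (exp (- eta * ln c) / c) with (exp (- (1 + eta) * ln c)).
  - apply exp_le. assert (ln c <= ln t) by (apply ln_le; lra).
    assert (0 <= ln c) by (apply ln_ge0; lra). nra.
  - replace (- (1 + eta) * ln c) with (- eta * ln c + - ln c) by ring.
    rewrite exp_plus, exp_Ropp, exp_ln by lra. field. lra.
Qed.

Lemma cpow_neg_eq t s : cpow_neg t s =
  (exp (- fst s * ln t) * cos (- snd s * ln t), exp (- fst s * ln t) * sin (- snd s * ln t)).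
Proof.
  destruct s as [x y]. unfold cpow_neg, cexp, Copp, Cmult, RtoC, Re, Im. simpl.
  replace (- (x * ln t - y * 0)) with (- x * ln t) by ring.
  replace (- (x * 0 + y * ln t)) with (- y * ln t) by ring. reflexivity.
Qed.

Definition fr (x y t : R) := exp (- x * ln t) * cos (- y * ln t).
Definition fi (x y t : R) := exp (- x * ln t) * sin (- y * ln t).
Definition fr' (x y t : R) := exp (- x * ln t) * (- x / t) * cos (- y * ln t) + exp (- x * ln t) * (- sin (- y * ln t)) * (- y / t).
Definition fi' (x y t : R) := exp (- x * ln t) * (- x / t) * sin (- y * ln t) + exp (- x * ln t) * cos (- y * ln t) * (- y / t).

Lemma fr_deriv x y t : 0 < t -> derivable_pt_lim (fr x y) t (fr' x y t).
Proof. intros Ht. apply is_derive_Reals. unfold fr, fr'. auto_derive. auto. field. lra. Qed.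
Lemma fi_deriv x y t : 0 < t -> derivable_pt_lim (fi x y) t (fi' x y t).
Proof. intros Ht. apply is_derive_Reals. unfold fi, fi'. auto_derive. auto. field. lra. Qed.

Lemma gr_deriv x y t : 0 < t -> derivable_pt_lim (fun t => ln t * fr x y t) t (fr x y t / t + ln t * fr' x y t).
Proof. intros Ht. apply is_derive_Reals. unfold fr, fr'. auto_derive. auto. field. lra. Qed.
Lemma gi_deriv x y t : 0 < t -> derivable_pt_lim (fun t => ln t * fi x y t) t (fi x y t / t + ln t * fi' x y t).
Proof. intros Ht. apply is_derive_Reals. unfold fi, fi'. auto_derive. auto. field. lra. Qed.

Lemma fr'_bound x y t : 0 < t -> Rabs (fr' x y t) <= exp (- x * ln t) / t * (Rabs x + Rabs y).
Proof.
  intros Ht. unfold fr'. pose proof (exp_pos (- x * ln t)) as He.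
  pose proof (COS_bound (- y * ln t)). pose proof (SIN_bound (- y * ln t)).
  replace (exp (- x * ln t) * (- x / t) * cos (- y * ln t) + exp (- x * ln t) * (- sin (- y * ln t)) * (- y / t))
    with (exp (- x * ln t) / t * (- x * cos (- y * ln t) + y * sin (- y * ln t))) by (field; lra).
  rewrite Rabs_mult. rewrite (Rabs_pos_eq (exp _ / t)) by (left; apply Rdiv_lt_0_compat; auto).
  apply Rmult_le_compat_l. left; apply Rdiv_lt_0_compat; auto.
  eapply Rle_trans; [apply Rabs_triang|]. rewrite !Rabs_mult, Rabs_Ropp.
  assert (Rabs (cos (- y * ln t)) <= 1) by (apply Rabs_le; lra).
  assert (Rabs (sin (- y * ln t)) <= 1) by (apply Rabs_le; lra).
  pose proof (Rabs_pos x). pose proof (Rabs_pos y). nra.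
Qed.

Lemma fi'_bound x y t : 0 < t -> Rabs (fi' x y t) <= exp (- x * ln t) / t * (Rabs x + Rabs y).
Proof.
  intros Ht. unfold fi'. pose proof (exp_pos (- x * ln t)) as He.
  pose proof (COS_bound (- y * ln t)). pose proof (SIN_bound (- y * ln t)).
  replace (exp (- x * ln t) * (- x / t) * sin (- y * ln t) + exp (- x * ln t) * cos (- y * ln t) * (- y / t))
    with (exp (- x * ln t) / t * (- x * sin (- y * ln t) + - y * cos (- y * ln t))) by (field; lra).
  rewrite Rabs_mult. rewrite (Rabs_pos_eq (exp _ / t)) by (left; apply Rdiv_lt_0_compat; auto).
  apply Rmult_le_compat_l. left; apply Rdiv_lt_0_compat; auto.
  eapply Rle_trans; [apply Rabs_triang|]. rewrite !Rabs_mult, !Rabs_Ropp.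
  assert (Rabs (cos (- y * ln t)) <= 1) by (apply Rabs_le; lra).
  assert (Rabs (sin (- y * ln t)) <= 1) by (apply Rabs_le; lra).
  pose proof (Rabs_pos x). pose proof (Rabs_pos y). nra.
Qed.

Lemma fr_bound x y t : Rabs (fr x y t) <= exp (- x * ln t).
Proof.
  unfold fr. rewrite Rabs_mult, Rabs_pos_eq by (left; apply exp_pos).
  pose proof (exp_pos (- x * ln t)). pose proof (COS_bound (- y * ln t)).
  assert (Rabs (cos (- y * ln t)) <= 1) by (apply Rabs_le; lra). nra.
Qed.
Lemma fi_bound x y t : Rabs (fi x y t) <= exp (- x * ln t).
Proof.
  unfold fi. rewrite Rabs_mult, Rabs_pos_eq by (left; apply exp_pos).
  pose proof (exp_pos (- x * ln t)). pose proof (SIN_bound (- y * ln t)).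
  assert (Rabs (sin (- y * ln t)) <= 1) by (apply Rabs_le; lra). nra.
Qed.

Lemma exp_sig_le x eta t : eta <= x -> 1 <= t -> exp (- x * ln t) <= phi eta t.
Proof. intros. unfold phi. apply exp_le. pose proof (ln_ge0 t H0). nra. Qed.

Lemma E1_comp (f f' : R -> R -> R -> R) x y K eta a b :
  (forall t, 0 < t -> derivable_pt_lim (f x y) t (f' x y t)) ->
  (forall t, 0 < t -> Rabs (f' x y t) <= exp (- x * ln t) / t * (Rabs x + Rabs y)) ->
  0 < eta -> eta <= x -> Rabs x <= K -> Rabs y <= K -> 1 <= a <= b ->
  Rabs (f x y b - f x y a) <= (2 * K / eta) * (phi eta a - phi eta b).
Proof.
  intros Hd Hb He Hx HK1 HK2 Hab.
  apply (drop (f x y) (f' x y) (phi eta) (fun t => - eta * phi eta t / t)); try tauto.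
  - intros t Ht. apply Hd; lra.
  - intros t Ht. apply derivable_phi; lra.
  - intros t Ht. eapply Rle_trans; [apply Hb; lra|].
    replace (- (2 * K / eta) * (- eta * phi eta t / t)) with (phi eta t / t * (2 * K)) by (field; lra).
    apply Rmult_le_compat.
    + left; apply Rdiv_lt_0_compat; [apply exp_pos|lra].
    + pose proof (Rabs_pos x); pose proof (Rabs_pos y); lra.
    + unfold Rdiv. apply Rmult_le_compat_r. left; apply Rinv_0_lt_compat; lra.
      apply exp_sig_le; lra.
    + lra.
Qed.

Lemma E1 (s : C) K eta a b : 0 < eta -> eta <= fst s -> Cmod s <= K -> 1 <= a <= b ->
  Cmod (cpow_neg a s - cpow_neg b s)%C <= (4 * K / eta) * (phi eta a - phi eta b).
Proof.
  intros He Hx HK Hab.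
  assert (H1 : Rabs (fst s) <= K) by (pose proof (Rabs_fst_le s); lra).
  assert (H2 : Rabs (snd s) <= K) by (pose proof (Rabs_snd_le s); lra).
  rewrite <- Cmod_opp. replace (- (cpow_neg a s - cpow_neg b s))%C with (cpow_neg b s - cpow_neg a s)%C by ring.
  eapply Rle_trans; [apply Cmod_le_ReIm|]. rewrite fst_minus, snd_minus, !cpow_neg_eq. simpl.
  pose proof (E1_comp fr fr' (fst s) (snd s) K eta a b (fr_deriv _ _) (fr'_bound _ _) He Hx H1 H2 Hab).
  pose proof (E1_comp fi fi' (fst s) (snd s) K eta a b (fi_deriv _ _) (fi'_bound _ _) He Hx H1 H2 Hab).
  unfold fr, fi in *.
  replace (4 * K / eta * (phi eta a - phi eta b)) with (2 * K / eta * (phi eta a - phi eta b) + 2 * K / eta * (phi eta a - phi eta b)) by (field; lra).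
  lra.
Qed.

Lemma E3_comp (f f' : R -> R -> R -> R) x y K eta a b :
  (forall t, 0 < t -> derivable_pt_lim (fun t => ln t * f x y t) t (f x y t / t + ln t * f' x y t)) ->
  (forall t, 0 < t -> Rabs (f' x y t) <= exp (- x * ln t) / t * (Rabs x + Rabs y)) ->
  (forall t, Rabs (f x y t) <= exp (- x * ln t)) ->
  0 < eta -> 2 * eta <= x -> Rabs x <= K -> Rabs y <= K -> 1 <= a <= b ->
  Rabs (ln b * f x y b - ln a * f x y a) <= ((1 + 2 * K / eta) / eta) * (phi eta a - phi eta b).
Proof.
  intros Hd Hb Hb0 He Hx HK1 HK2 Hab.
  apply (drop (fun t => ln t * f x y t) (fun t => f x y t / t + ln t * f' x y t) (phi eta) (fun t => - eta * phi eta t / t)); try tauto.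
  - intros t Ht. apply Hd; lra.
  - intros t Ht. apply derivable_phi; lra.
  - intros t Ht.
    assert (Ht0 : 0 < t) by lra.
    set (L := ln t). assert (HL : 0 <= L) by (apply ln_ge0; lra).
    assert (HK : 0 <= K) by (pose proof (Rabs_pos x); lra).
    replace (- ((1 + 2 * K / eta) / eta) * (- eta * phi eta t / t)) with ((1 + 2 * K / eta) * phi eta t / t) by (field; lra).
    eapply Rle_trans; [apply Rabs_triang|].
    rewrite Rabs_mult, (Rabs_pos_eq L) by lra.
    unfold Rdiv at 1. rewrite Rabs_mult, (Rabs_pos_eq (/ t)) by (left; apply Rinv_0_lt_compat; lra).
    pose proof (Hb0 t). pose proof (Hb t Ht0). fold L in H, H0.
    set (E := exp (- x * L)) in *.
    assert (HE : E <= exp (- (2 * eta) * L)) by (unfold E; apply exp_le; nra).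
    assert (HE' : exp (- (2 * eta) * L) * exp (eta * L) = phi eta t).
    { unfold phi. rewrite <- exp_plus. f_equal. fold L. ring. }
    assert (HE2 : exp (- (2 * eta) * L) <= phi eta t).
    { unfold phi. apply exp_le. fold L. nra. }
    pose proof (ln_le_exp eta L He) as HLe.
    pose proof (exp_pos (- (2 * eta) * L)). pose proof (exp_pos (eta * L)).
    assert (HEpos : 0 < E) by apply exp_pos.
    assert (Hsum : E * (1 + 2 * K * L) <= (1 + 2 * K / eta) * phi eta t).
    { apply Rle_trans with (exp (- (2 * eta) * L) * (1 + 2 * K * (exp (eta * L) / eta))).
      apply Rmult_le_compat; nra.
      rewrite <- HE'. apply Rle_trans with (exp (- (2 * eta) * L) + 2 * K / eta * (exp (- (2 * eta) * L) * exp (eta * L))).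
      right; field; lra. rewrite HE'. nra. }
    apply Rle_trans with (E * / t + L * (E / t * (2 * K))).
    { apply Rplus_le_compat. apply Rmult_le_compat_r. left; apply Rinv_0_lt_compat; lra. auto.
      apply Rmult_le_compat_l; auto. eapply Rle_trans; [apply H0|].
      apply Rmult_le_compat_l. left; apply Rdiv_lt_0_compat; lra. lra. }
    apply Rle_trans with (E * (1 + 2 * K * L) / t). right; field; lra.
    unfold Rdiv. apply Rmult_le_compat_r. left; apply Rinv_0_lt_compat; lra. auto.
Qed.

Lemma E3 (s : C) K eta a b : 0 < eta -> 2 * eta <= fst s -> Cmod s <= K -> 1 <= a <= b ->
  Cmod (RtoC (ln a) * cpow_neg a s - RtoC (ln b) * cpow_neg b s)%C <= 2 * ((1 + 2 * K / eta) / eta) * (phi eta a - phi eta b).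
Proof.
  intros He Hx HK Hab.
  assert (H1 : Rabs (fst s) <= K) by (pose proof (Rabs_fst_le s); lra).
  assert (H2 : Rabs (snd s) <= K) by (pose proof (Rabs_snd_le s); lra).
  rewrite <- Cmod_opp. replace (- (RtoC (ln a) * cpow_neg a s - RtoC (ln b) * cpow_neg b s))%C with (RtoC (ln b) * cpow_neg b s - RtoC (ln a) * cpow_neg a s)%C by ring.
  eapply Rle_trans; [apply Cmod_le_ReIm|]. rewrite fst_minus, snd_minus, !fst_RtoC_mult, !snd_RtoC_mult, !cpow_neg_eq. simpl.
  pose proof (E3_comp fr fr' (fst s) (snd s) K eta a b (gr_deriv _ _) (fr'_bound _ _) (fr_bound _ _) He Hx H1 H2 Hab).
  pose proof (E3_comp fi fi' (fst s) (snd s) K eta a b (gi_deriv _ _) (fi'_bound _ _) (fi_bound _ _) He Hx H1 H2 Hab).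
  unfold fr, fi in *. lra.
Qed.

Definition good_l (N : nat) (l : nat -> R) (eps : R) :=
  (eps = 1 \/ eps = -1) /\ (forall n, (1 <= n)%nat -> -1 <= l n <= 1) /\
  (forall n, (N <= n)%nat -> l n = eps * (-1) ^ n).
Definition good_a (a : nat -> Z) :=
  (2 <= a 1%nat)%Z /\ (forall n, (1 <= n)%nat -> (a n < a (S n))%Z).

Lemma a_ge (a : nat -> Z) : good_a a -> forall n, (1 <= n)%nat -> INR n + 1 <= IZR (a n).
Proof.
  intros [H1 H2] n Hn. induction n as [|n IH]; [lia|].
  destruct (Nat.eq_dec n 0) as [->|Hn0].
  - simpl. apply IZR_le in H1. lra.
  - specialize (IH ltac:(lia)). specialize (H2 n ltac:(lia)).
    assert (a n + 1 <= a (S n))%Z by lia. apply IZR_le in H. rewrite plus_IZR in H.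
    rewrite S_INR. lra.
Qed.

Lemma a_step (a : nat -> Z) : good_a a -> forall n, (1 <= n)%nat -> IZR (a n) + 1 <= IZR (a (S n)).
Proof.
  intros [H1 H2] n Hn. specialize (H2 n Hn).
  assert (a n + 1 <= a (S n))%Z by lia. apply IZR_le in H. rewrite plus_IZR in H. lra.
Qed.

Lemma a_ge2 (a : nat -> Z) : good_a a -> forall n, (1 <= n)%nat -> 2 <= IZR (a n).
Proof. intros Ha n Hn. pose proof (a_ge a Ha n Hn). apply le_INR in Hn. simpl in Hn. lra. Qed.

Lemma a_mono (a : nat -> Z) : good_a a -> forall n k, (1 <= n)%nat -> IZR (a n) <= IZR (a (n + k)%nat).
Proof.
  intros Ha n k Hn. induction k as [|k IH]. rewrite Nat.add_0_r; lra.
  replace (n + S k)%nat with (S (n + k)) by lia. pose proof (a_step a Ha (n + k) ltac:(lia)). lra.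
Qed.

Definition Xn (a : nat -> Z) n s := cpow_neg (IZR (a n)) s.
Definition gd (l : nat -> R) (a : nat -> Z) n s :=
  (- (RtoC (l n) * RtoC (ln (IZR (a n))) * Xn a n s) * (euler_factor l a n s * euler_factor l a n s))%C.
Fixpoint dP (l : nat -> R) (a : nat -> Z) (M : nat) (s : C) : C :=
  match M with
  | O => RtoC 0
  | S m => (dP l a m s * euler_factor l a (S m) s + partial_euler_prod l a m s * gd l a (S m) s)%C
  end.

Lemma Cmod_cpow t s : Cmod (cpow_neg t s) = exp (- fst s * ln t).
Proof.
  unfold cpow_neg. rewrite Cmod_cexp. f_equal. destruct s; unfold Copp, Cmult, RtoC; simpl. ring.
Qed.

Lemma Cmod_cpow_le t s sig : 1 <= t -> sig <= fst s -> Cmod (cpow_neg t s) <= exp (- sig * ln t).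
Proof. intros. rewrite Cmod_cpow. apply exp_le. pose proof (ln_ge0 t H). nra. Qed.

Lemma Cmod_cpow_34 t s : 2 <= t -> 1/2 < fst s -> Cmod (cpow_neg t s) <= 3/4.
Proof.
  intros Ht Hs. rewrite Cmod_cpow.
  apply Rle_trans with (exp (- (1/2) * ln 2)).
  - apply exp_le. assert (ln 2 <= ln t) by (apply ln_le; lra).
    pose proof ln_lt_2. nra.
  - set (y := exp (- (1/2) * ln 2)). assert (Hy : 0 < y) by apply exp_pos.
    assert (y * y = / 2).
    { unfold y. rewrite <- exp_plus. replace (- (1/2) * ln 2 + - (1/2) * ln 2) with (- ln 2) by lra.
      rewrite exp_Ropp, exp_ln; lra. }
    nra.
Qed.

Lemma Q_bounds (c : R) (X : C) : -1 <= c <= 1 -> Cmod X <= 3/4 ->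
  1/4 <= Cmod (RtoC 1 - RtoC c * X)%C <= 2.
Proof.
  intros Hc HX. assert (Hcm : Cmod (RtoC c) <= 1) by (rewrite Cmod_R; apply Rabs_le; lra).
  pose proof (Cmod_ge_0 X). pose proof (Cmod_ge_0 (RtoC c)).
  split.
  - pose proof (Cmod_triangle (RtoC 1 - RtoC c * X)%C (RtoC c * X)%C).
    replace (RtoC 1 - RtoC c * X + RtoC c * X)%C with (RtoC 1) in H1 by ring.
    rewrite Cmod_1, Cmod_mult in H1. nra.
  - eapply Rle_trans; [apply Cmod_triangle|]. rewrite Cmod_1, Cmod_opp, Cmod_mult. nra.
Qed.

Lemma Cinv_bounds (q : C) : 1/4 <= Cmod q <= 2 -> q <> RtoC 0 /\ Cmod (Cinv q) <= 4 /\ 1/2 <= Cmod (Cinv q).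
Proof.
  intros Hq. assert (Hq0 : q <> RtoC 0).
  { intro E. rewrite E, Cmod_0 in Hq. lra. }
  split; auto. rewrite Cmod_inv by auto. split.
  - apply Rle_trans with (/ (1/4)). apply Rinv_le_contravar; lra. lra.
  - apply Rle_trans with (/ 2). lra. apply Rinv_le_contravar; lra.
Qed.

Lemma g_bounds N l eps a n s : good_l N l eps -> good_a a -> (1 <= n)%nat -> 1/2 < fst s ->
  (RtoC 1 - RtoC (l n) * Xn a n s)%C <> RtoC 0 /\
  Cmod (euler_factor l a n s) <= 4 /\ 1/2 <= Cmod (euler_factor l a n s).
Proof.
  intros [_ [Hl _]] Ha Hn Hs.
  apply Cinv_bounds. apply Q_bounds. auto. apply Cmod_cpow_34; auto. apply a_ge2; auto.
Qed.

Lemma hasD_eqd f z d1 d2 : d1 = d2 -> hasD f z d1 -> hasD f z d2.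
Proof. intros ->; auto. Qed.

Lemma hasD_cpow (A : R) (z : C) : hasD (fun s => cpow_neg A s) z (- RtoC (ln A) * cpow_neg A z)%C.
Proof.
  pose proof (hasD_comp (fun w => - RtoC (ln A) * w + RtoC 0)%C cexp z (- RtoC (ln A))%C
    (cexp (- RtoC (ln A) * z + RtoC 0)%C) (hasD_affine _ _ z) (hasD_cexp _)).
  eapply hasD_eqd; [|eapply hasD_ext; [|exact H]].
  - unfold cpow_neg. replace (- RtoC (ln A) * z + RtoC 0)%C with (- (z * RtoC (ln A)))%C by ring. ring.
  - intros w. simpl. unfold cpow_neg. f_equal. ring.
Qed.

Lemma hasD_g N l eps a n z : good_l N l eps -> good_a a -> (1 <= n)%nat -> 1/2 < fst z ->
  hasD (euler_factor l a n) z (gd l a n z).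
Proof.
  intros Hl Ha Hn Hz.
  destruct (g_bounds N l eps a n z Hl Ha Hn Hz) as [Hq _].
  set (q := fun w => (- RtoC (l n) * w + RtoC 1)%C).
  pose proof (hasD_comp _ q z _ (- RtoC (l n))%C (hasD_cpow (IZR (a n)) z) (hasD_affine _ _ _)) as H1.
  assert (Hq' : q (cpow_neg (IZR (a n)) z) <> RtoC 0).
  { unfold q. replace (- RtoC (l n) * cpow_neg (IZR (a n)) z + RtoC 1)%C with (RtoC 1 - RtoC (l n) * Xn a n z)%C by (unfold Xn; ring). auto. }
  pose proof (hasD_comp _ Cinv z _ _ H1 (hasD_Cinv _ Hq')) as H2.
  eapply hasD_eqd; [|eapply hasD_ext; [|exact H2]].
  - unfold gd, euler_factor, Xn. unfold q in *. field. 
    replace (RtoC 1 - RtoC (l n) * cpow_neg (IZR (a n)) z)%C with (- RtoC (l n) * cpow_neg (IZR (a n)) z + RtoC 1)%C by ring. auto.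
  - intros w. unfold euler_factor, q. f_equal. ring.
Qed.

Lemma hasD_P N l eps a M z : good_l N l eps -> good_a a -> 1/2 < fst z ->
  hasD (partial_euler_prod l a M) z (dP l a M z).
Proof.
  intros Hl Ha Hz. induction M as [|m IH].
  - simpl. eapply hasD_eqd; [|eapply hasD_ext; [|apply (hasD_affine (RtoC 0) (RtoC 1) z)]].
    reflexivity. intros w. simpl. ring.
  - simpl. apply (hasD_mult (partial_euler_prod l a m) (euler_factor l a (S m))); auto.
    apply (hasD_g N l eps); auto. lia.
Qed.

Lemma pow_m1_cases n : (-1) ^ n = 1 \/ (-1) ^ n = -1.
Proof. induction n as [|n IH]; simpl. auto. destruct IH as [-> | ->]; [right|left]; ring. Qed.

Lemma sign_pair N l eps M : good_l N l eps -> (N <= M)%nat ->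
  (l (S M) = 1 \/ l (S M) = -1) /\ l (S (S M)) = - l (S M).
Proof.
  intros [He [_ Hl]] HM. rewrite !Hl by lia. split.
  - destruct He as [-> | ->]; destruct (pow_m1_cases (S M)) as [-> | ->]; [left|right|right|left]; ring.
  - simpl. ring.
Qed.

Lemma alg_A (Q1 Q2 : C) : Q1 <> RtoC 0 -> Q2 <> RtoC 0 ->
  (/ Q1 * / Q2 - RtoC 1)%C = (/ Q1 * / Q2 * (RtoC 1 - Q1 * Q2))%C.
Proof. intros. field. auto. Qed.

Lemma alg_B (Q1 Q2 c L1 L2 X1 X2 : C) : Q1 <> RtoC 0 -> Q2 <> RtoC 0 ->
  (- (c * L1 * X1) * (/ Q1 * / Q1) * / Q2 + / Q1 * (c * L2 * X2 * (/ Q2 * / Q2)))%C =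
  (c * / Q1 * / Q2 * ((L2 * X2 - L1 * X1) * / Q2 + L1 * X1 * / Q1 * / Q2 * (Q1 - Q2)))%C.
Proof. intros. field. auto. Qed.

Lemma alg_C (Q1 Q2 : C) : Q1 <> RtoC 0 -> Q2 <> RtoC 0 -> (/ Q1 * / Q2 * (Q1 * Q2))%C = RtoC 1.
Proof. intros. field. auto. Qed.

Definition etaof (sig1 : R) := (2 * sig1 - 1) / 4.

Lemma pair_bounds N l eps a sig1 K : good_l N l eps -> good_a a -> (1 <= N)%nat -> 1/2 < sig1 -> 0 <= K ->
  exists cU cG, 0 <= cU /\ 0 <= cG /\ forall s M, sig1 <= fst s -> Cmod s <= K -> (N <= M)%nat ->
    Cmod (euler_factor l a (S M) s * euler_factor l a (S (S M)) s - RtoC 1)%C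
      <= cU * (phi (etaof sig1) (IZR (a M)) - phi (etaof sig1) (IZR (a (S (S M))))) /\
    Cmod (gd l a (S M) s * euler_factor l a (S (S M)) s + euler_factor l a (S M) s * gd l a (S (S M)) s)%C
      <= cG * (phi (etaof sig1) (IZR (a M)) - phi (etaof sig1) (IZR (a (S (S M))))) /\
    1 <= Cmod (euler_factor l a (S M) s * euler_factor l a (S (S M)) s)%C *
      (1 + cU * (phi (etaof sig1) (IZR (a M)) - phi (etaof sig1) (IZR (a (S (S M)))))).
Proof.
  intros Hl Ha HN Hs HK.
  set (eta := etaof sig1).
  assert (He : 0 < eta) by (unfold eta, etaof; lra).
  set (C3 := (1 + 2 * K / eta) / eta).
  assert (HKe : 0 <= K / eta) by (apply Rdiv_le_0_compat; lra).
  assert (HC3 : 0 <= C3) by (unfold C3; apply Rdiv_le_0_compat; lra).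
  assert (Hee : 0 < eta * eta) by nra.
  exists (16 * ((4 * K + 1) / eta)), (16 * (8 * C3 + 32 / (eta * eta))).
  split. { apply Rmult_le_pos. lra. apply Rdiv_le_0_compat; lra. }
  split. { apply Rmult_le_pos. lra. assert (0 <= 32 / (eta * eta)) by (apply Rdiv_le_0_compat; lra). lra. }
  intros s M Hs1 HsK HM.
  assert (Hsig : 1/2 < fst s) by lra.
  set (A0 := IZR (a M)). set (A1 := IZR (a (S M))). set (A2 := IZR (a (S (S M)))).
  assert (HA0 : 2 <= A0) by (apply a_ge2; auto; lia).
  assert (HA01 : A0 + 1 <= A1) by (apply a_step; auto; lia).
  assert (HA12 : A1 + 1 <= A2) by (apply a_step; auto; lia).
  set (D1 := phi eta A0 - phi eta A1). set (D2 := phi eta A1 - phi eta A2).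
  assert (HD1 : 0 <= D1) by (unfold D1; pose proof (phi_anti eta A0 A1 ltac:(lra) ltac:(lra) ltac:(lra)); lra).
  assert (HD2 : 0 <= D2) by (unfold D2; pose proof (phi_anti eta A1 A2 ltac:(lra) ltac:(lra) ltac:(lra)); lra).
  replace (phi eta A0 - phi eta A2) with (D1 + D2) by (unfold D1, D2; ring).
  destruct (sign_pair N l eps M Hl HM) as [Hc Hc2].
  set (X1 := Xn a (S M) s). set (X2 := Xn a (S (S M)) s).
  set (L1 := ln A1). set (L2 := ln A2).
  assert (HL1 : 0 <= L1) by (apply ln_ge0; lra).
  assert (BX1 : Cmod X1 <= exp (- sig1 * L1)) by (unfold X1, Xn, L1; apply Cmod_cpow_le; [fold A1|]; lra).
  assert (BX2 : Cmod X2 <= exp (- sig1 * L1)).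
  { unfold X2, Xn. fold A2. eapply Rle_trans. apply Cmod_cpow_le with (sig := sig1); lra. apply exp_le.
    fold L2. assert (L1 <= L2) by (apply ln_le; lra). nra. }
  assert (Hes : eta <= fst s) by (unfold eta, etaof; lra).
  assert (Hes2 : 2 * eta <= fst s) by (unfold eta, etaof; lra).
  assert (F1 : Cmod (X1 - X2)%C <= (4 * K / eta) * D2) by (unfold X1, X2, Xn, D2; fold A1 A2; apply E1; auto; split; lra).
  assert (F3' : exp (- (1 + eta) * L1) <= D1 / eta).
  { apply Rle_trans with ((phi eta (A1 - 1) - phi eta A1) / eta). apply drop1; lra.
    unfold Rdiv; apply Rmult_le_compat_r. left; apply Rinv_0_lt_compat; lra.
    unfold D1. pose proof (phi_anti eta A0 (A1 - 1) ltac:(lra) ltac:(lra) ltac:(lra)). lra. }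
  assert (F3 : exp (- sig1 * L1) * exp (- sig1 * L1) <= D1 / eta).
  { rewrite <- exp_plus. eapply Rle_trans; [|apply F3']. apply exp_le.
    assert (- sig1 + - sig1 <= - (1 + eta)) by (unfold eta, etaof; lra). nra. }
  assert (F4 : Cmod (RtoC L1 * X1 - RtoC L2 * X2)%C <= 2 * C3 * D2) by (unfold X1, X2, Xn, D2, L1, L2, C3; fold A1 A2; apply E3; auto; split; lra).
  assert (F5 : L1 * exp (- sig1 * L1) * (2 * exp (- sig1 * L1)) <= 2 / eta * (D1 / eta)).
  { pose proof (ln_le_exp eta L1 He).
    apply Rle_trans with (exp (eta * L1) / eta * exp (- sig1 * L1) * (2 * exp (- sig1 * L1))).
    { apply Rmult_le_compat_r. pose proof (exp_pos (- sig1 * L1)); lra.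
      apply Rmult_le_compat_r. pose proof (exp_pos (- sig1 * L1)); lra. auto. }
    replace (exp (eta * L1) / eta * exp (- sig1 * L1) * (2 * exp (- sig1 * L1))) with
      (2 / eta * exp (eta * L1 + - sig1 * L1 + - sig1 * L1)) by (rewrite !exp_plus; field; lra).
    apply Rmult_le_compat_l. apply Rdiv_le_0_compat; lra.
    eapply Rle_trans; [|apply F3']. apply exp_le.
    assert (eta - sig1 - sig1 <= - (1 + eta)) by (unfold eta, etaof; lra). nra. }
  destruct (g_bounds N l eps a (S M) s Hl Ha ltac:(lia) Hsig) as [Hq1 [Hg1 _]].
  destruct (g_bounds N l eps a (S (S M)) s Hl Ha ltac:(lia) Hsig) as [Hq2 [Hg2 _]].
  set (c := l (S M)) in *.
  set (Q1 := (RtoC 1 - RtoC c * X1)%C) in *.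
  set (Q2 := (RtoC 1 - RtoC (l (S (S M))) * X2)%C) in *.
  assert (Eg1 : euler_factor l a (S M) s = Cinv Q1) by reflexivity.
  assert (Eg2 : euler_factor l a (S (S M)) s = Cinv Q2) by reflexivity.
  assert (Egd1 : gd l a (S M) s = (- (RtoC c * RtoC L1 * X1) * (/ Q1 * / Q1))%C) by reflexivity.
  assert (Egd2 : gd l a (S (S M)) s = (RtoC c * RtoC L2 * X2 * (/ Q2 * / Q2))%C).
  { unfold gd. fold X2 A2 L2. rewrite <- Eg2. rewrite Hc2, RtoC_opp. ring. }
  rewrite Eg1, Eg2 in *. rewrite Egd1, Egd2.
  assert (Hcc : (RtoC c * RtoC c)%C = RtoC 1).
  { rewrite <- RtoC_mult. f_equal. destruct Hc as [-> | ->]; ring. }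
  assert (Hcm : Cmod (RtoC c) = 1) by (rewrite Cmod_R; destruct Hc as [-> | ->]; [apply Rabs_R1|rewrite Rabs_left by lra; lra]).
  set (u := (RtoC c * (X1 - X2) + X1 * X2)%C).
  assert (HQQ : (Q1 * Q2)%C = (RtoC 1 - u)%C).
  { unfold Q1, Q2, u. rewrite Hc2, RtoC_opp.
    replace (RtoC 1 - (RtoC c * (X1 - X2) + X1 * X2))%C with
      (RtoC 1 - (RtoC c * (X1 - X2) + (RtoC c * RtoC c) * X1 * X2))%C by (rewrite Hcc; ring).
    ring. }
  assert (Hu : Cmod u <= (4 * K / eta) * D2 + D1 / eta).
  { unfold u. eapply Rle_trans; [apply Cmod_triangle|]. rewrite !Cmod_mult, Hcm.
    pose proof (Cmod_ge_0 X1). pose proof (Cmod_ge_0 X2).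
    assert (Cmod X1 * Cmod X2 <= exp (- sig1 * L1) * exp (- sig1 * L1)) by (apply Rmult_le_compat; auto).
    lra. }
  assert (Hu2 : (4 * K / eta) * D2 + D1 / eta <= (4 * K + 1) / eta * (D1 + D2)).
  { replace ((4 * K + 1) / eta * (D1 + D2)) with ((4 * K / eta) * D2 + D1 / eta + ((4 * K / eta) * D1 + D2 / eta)) by (field; lra).
    assert (0 <= (4 * K / eta) * D1) by (apply Rmult_le_pos; [apply Rdiv_le_0_compat|]; lra).
    assert (0 <= D2 / eta) by (apply Rdiv_le_0_compat; lra). lra. }
  assert (Hg1' : 0 <= Cmod (/ Q1)%C) by apply Cmod_ge_0.
  assert (Hg2' : 0 <= Cmod (/ Q2)%C) by apply Cmod_ge_0.
  assert (Hgg : Cmod (/ Q1 * / Q2)%C <= 16) by (rewrite Cmod_mult; nra).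
  split; [|split].
  - rewrite alg_A, HQQ by auto. replace (RtoC 1 - (RtoC 1 - u))%C with u by ring.
    rewrite Cmod_mult. pose proof (Cmod_ge_0 u). pose proof (Cmod_ge_0 (/ Q1 * / Q2)%C).
    apply Rle_trans with (16 * Cmod u). apply Rmult_le_compat_r; auto.
    lra.
  - rewrite alg_B by auto.
    replace (Q1 - Q2)%C with (- (RtoC c * (X1 + X2)))%C by (unfold Q1, Q2; rewrite Hc2, RtoC_opp; ring).
    rewrite !Cmod_mult, Hcm.
    set (W := Cmod (X1 + X2)%C).
    assert (HW : W <= 2 * exp (- sig1 * L1)) by (unfold W; eapply Rle_trans; [apply Cmod_triangle|]; lra).
    assert (HW0 : 0 <= W) by apply Cmod_ge_0.
    pose proof (Cmod_ge_0 X1).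
    set (Y := ((RtoC L2 * X2 - RtoC L1 * X1) * / Q2 + RtoC L1 * X1 * / Q1 * / Q2 * - (RtoC c * (X1 + X2)))%C).
    set (V := Cmod (RtoC L1 * X1 - RtoC L2 * X2)%C).
    assert (HV0 : 0 <= V) by apply Cmod_ge_0.
    assert (HY : Cmod Y <= V * Cmod (/ Q2)%C + L1 * Cmod X1 * Cmod (/ Q1)%C * Cmod (/ Q2)%C * W).
    { unfold Y. eapply Rle_trans; [apply Cmod_triangle|].
      rewrite !Cmod_mult, Cmod_opp, Cmod_mult, Hcm, Cmod_R, (Rabs_pos_eq L1) by lra.
      replace (Cmod (RtoC L2 * X2 - RtoC L1 * X1)%C) with V.
      fold W. lra.
      unfold V. rewrite <- Cmod_opp. f_equal. ring. }
    assert (T1 : L1 * Cmod X1 * W <= 2 / eta * (D1 / eta)).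
    { eapply Rle_trans; [|apply F5]. apply Rmult_le_compat; try nra; try (apply Rmult_le_compat_l; auto). }
    assert (T2 : V * Cmod (/ Q2)%C <= 4 * (2 * C3 * D2)) by (rewrite (Rmult_comm 4); apply Rmult_le_compat; auto).
    assert (T3 : L1 * Cmod X1 * Cmod (/ Q1)%C * Cmod (/ Q2)%C * W <= 16 * (2 / eta * (D1 / eta))).
    { replace (L1 * Cmod X1 * Cmod (/ Q1)%C * Cmod (/ Q2)%C * W) with ((Cmod (/ Q1)%C * Cmod (/ Q2)%C) * (L1 * Cmod X1 * W)) by ring.
      assert (0 <= L1 * Cmod X1 * W) by (apply Rmult_le_pos; [apply Rmult_le_pos|]; lra).
      apply Rmult_le_compat; auto. apply Rmult_le_pos; auto. nra. }
    assert (HZ : Cmod Y <= 8 * C3 * D2 + 32 / (eta * eta) * D1).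
    { replace (32 / (eta * eta) * D1) with (16 * (2 / eta * (D1 / eta))) by (field; lra). lra. }
    assert (0 <= 32 / (eta * eta) * D2) by (apply Rmult_le_pos; [apply Rdiv_le_0_compat|]; lra).
    assert (0 <= 8 * C3 * D1) by nra.
    assert (8 * C3 * D2 + 32 / (eta * eta) * D1 <= (8 * C3 + 32 / (eta * eta)) * (D1 + D2)) by nra.
    pose proof (Cmod_ge_0 Y).
    apply Rle_trans with (16 * Cmod Y).
    { replace (1 * Cmod (/ Q1)%C * Cmod (/ Q2)%C * Cmod Y) with ((Cmod (/ Q1)%C * Cmod (/ Q2)%C) * Cmod Y) by ring.
      apply Rmult_le_compat_r; auto. nra. }
    nra.
  - pose proof (alg_C Q1 Q2 Hq1 Hq2) as H. rewrite HQQ in H.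
    apply (f_equal Cmod) in H. rewrite Cmod_mult, Cmod_1 in H.
    apply Rle_trans with (Cmod (/ Q1 * / Q2)%C * Cmod (RtoC 1 - u)%C); [lra|].
    apply Rmult_le_compat_l. apply Cmod_ge_0.
    eapply Rle_trans; [apply Cmod_triangle|]. rewrite Cmod_1, Cmod_opp.
    pose proof (Cmod_ge_0 u). assert (0 <= (4 * K + 1) / eta * (D1 + D2)) by (apply Rmult_le_pos; [apply Rdiv_le_0_compat|]; lra).
    lra.
Qed.

Lemma single_bounds N l eps a sig1 : good_l N l eps -> good_a a -> 1/2 < sig1 ->
  exists cS, 0 <= cS /\ forall s M, sig1 <= fst s -> (1 <= M)%nat ->
    Cmod (euler_factor l a (S M) s - RtoC 1)%C <= cS * phi (etaof sig1) (IZR (a M)) /\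
    Cmod (gd l a (S M) s) <= cS * phi (etaof sig1) (IZR (a M)).
Proof.
  intros Hl Ha Hs.
  set (eta := etaof sig1). assert (He : 0 < eta) by (unfold eta, etaof; lra).
  assert (H16 : 0 <= 16 / eta) by (apply Rdiv_le_0_compat; lra).
  exists (4 + 16 / eta). split; [lra|].
  intros s M Hs1 HM.
  assert (Hsig : 1/2 < fst s) by lra.
  set (A0 := IZR (a M)). set (A1 := IZR (a (S M))).
  assert (HA0 : 2 <= A0) by (apply a_ge2; auto).
  assert (HA01 : A0 + 1 <= A1) by (apply a_step; auto).
  set (L := ln A1). assert (HL : 0 <= L) by (apply ln_ge0; lra).
  assert (Hphi : phi eta A1 <= phi eta A0) by (apply phi_anti; lra).
  assert (Hp0 : 0 < phi eta A0) by apply phi_pos.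
  destruct (g_bounds N l eps a (S M) s Hl Ha ltac:(lia) Hsig) as [Hq [Hg _]].
  destruct Hl as [_ [Hlr _]]. specialize (Hlr (S M) ltac:(lia)).
  assert (Hlm : Cmod (RtoC (l (S M))) <= 1) by (rewrite Cmod_R; apply Rabs_le; lra).
  set (X := Xn a (S M) s) in *.
  assert (BX : Cmod X <= exp (- sig1 * L)) by (unfold X, Xn, L; apply Cmod_cpow_le; [fold A1|]; lra).
  assert (BX' : exp (- sig1 * L) <= phi eta A1) by (unfold phi, L; apply exp_le; unfold eta, etaof; fold L; nra).
  pose proof (Cmod_ge_0 X).
  set (Q := (RtoC 1 - RtoC (l (S M)) * X)%C) in *.
  assert (Eg : euler_factor l a (S M) s = Cinv Q) by reflexivity.
  split.
  - rewrite Eg. replace (/ Q - RtoC 1)%C with (/ Q * (RtoC (l (S M)) * X))%C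
      by (unfold Q; field; auto).
    rewrite !Cmod_mult. pose proof (Cmod_ge_0 (/ Q)%C). pose proof (Cmod_ge_0 (RtoC (l (S M)))).
    apply Rle_trans with (4 * (1 * phi eta A0)).
    apply Rmult_le_compat; auto. apply Rmult_le_pos; auto. apply Rmult_le_compat; auto; lra.
    nra.
    unfold gd. rewrite Eg. fold X. fold A1 L.
    rewrite !Cmod_mult, Cmod_opp, !Cmod_mult, (Cmod_R L), (Rabs_pos_eq L) by lra.
    pose proof (Cmod_ge_0 (/ Q)%C). pose proof (Cmod_ge_0 (RtoC (l (S M)))).
    pose proof (ln_le_exp eta L He).
    assert (E2 : L * exp (- sig1 * L) <= phi eta A1 / eta).
    { apply Rle_trans with (exp (eta * L) / eta * exp (- sig1 * L)).
      apply Rmult_le_compat_r; auto. left; apply exp_pos.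
      replace (exp (eta * L) / eta * exp (- sig1 * L)) with (exp (eta * L + - sig1 * L) / eta) by (rewrite exp_plus; field; lra).
      unfold Rdiv. apply Rmult_le_compat_r. left; apply Rinv_0_lt_compat; lra.
      unfold phi, L. apply exp_le. fold L. unfold eta, etaof. nra. }
    assert (E3 : Cmod (RtoC (l (S M))) * L * Cmod X <= phi eta A0 / eta).
    { apply Rle_trans with (1 * (L * exp (- sig1 * L))).
      rewrite Rmult_assoc. apply Rmult_le_compat; try nra. 
      apply Rle_trans with (phi eta A1 / eta). lra.
      unfold Rdiv; apply Rmult_le_compat_r; [left; apply Rinv_0_lt_compat|]; lra. }
    assert (E4 : Cmod (/ Q)%C * Cmod (/ Q)%C <= 16) by (rewrite Eg in Hg; nra).
    assert (0 <= Cmod (RtoC (l (S M))) * L * Cmod X) by (repeat apply Rmult_le_pos; auto).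
    apply Rle_trans with (phi eta A0 / eta * 16). apply Rmult_le_compat; auto. apply Rmult_le_pos; auto.
    replace (phi eta A0 / eta * 16) with (16 / eta * phi eta A0) by (field; lra).
    assert (0 <= 4 * phi eta A0) by lra. nra.
Qed.

Lemma gd_crude N l eps a n s : good_l N l eps -> good_a a -> (1 <= n)%nat -> 1/2 < fst s ->
  Cmod (gd l a n s) <= 16 * Rabs (ln (IZR (a n))).
Proof.
  intros Hl Ha Hn Hs.
  destruct (g_bounds N l eps a n s Hl Ha Hn Hs) as [_ [Hg _]].
  destruct Hl as [_ [Hlr _]]. specialize (Hlr n Hn).
  assert (Hlm : Cmod (RtoC (l n)) <= 1) by (rewrite Cmod_R; apply Rabs_le; lra).
  assert (HX : Cmod (Xn a n s) <= 3/4) by (apply Cmod_cpow_34; auto; apply a_ge2; auto).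
  unfold gd. rewrite !Cmod_mult, Cmod_opp, !Cmod_mult, (Cmod_R (ln _)).
  pose proof (Cmod_ge_0 (euler_factor l a n s)). pose proof (Cmod_ge_0 (Xn a n s)).
  pose proof (Cmod_ge_0 (RtoC (l n))). pose proof (Rabs_pos (ln (IZR (a n)))).
  assert (Cmod (euler_factor l a n s) * Cmod (euler_factor l a n s) <= 16) by nra.
  assert (Cmod (RtoC (l n)) * Rabs (ln (IZR (a n))) * Cmod (Xn a n s) <= Rabs (ln (IZR (a n)))).
  { assert (Cmod (RtoC (l n)) * Cmod (Xn a n s) <= 1) by nra. nra. }
  assert (0 <= Cmod (RtoC (l n)) * Rabs (ln (IZR (a n))) * Cmod (Xn a n s)) by (repeat apply Rmult_le_pos; auto).
  nra.
Qed.

Lemma crude N l eps a : good_l N l eps -> good_a a -> forall m, exists B, 0 <= B /\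
  forall m' s, (m' <= m)%nat -> 1/2 < fst s ->
    Cmod (partial_euler_prod l a m' s) <= B /\ Cmod (dP l a m' s) <= B.
Proof.
  intros Hl Ha m. induction m as [|m [B [HB IH]]].
  - exists 1. split; [lra|]. intros m' s Hm Hs. assert (m' = 0%nat) by lia. subst. simpl.
    rewrite Cmod_1, Cmod_0. lra.
  - set (L := Rabs (ln (IZR (a (S m))))). assert (HL : 0 <= L) by apply Rabs_pos.
    exists (B * (4 + 16 * L)). split; [nra|].
    intros m' s Hm Hs. destruct (Nat.eq_dec m' (S m)) as [->|Hne].
    + destruct (IH m s ltac:(lia) Hs) as [H1 H2].
      destruct (g_bounds N l eps a (S m) s Hl Ha ltac:(lia) Hs) as [_ [Hg _]].
      pose proof (gd_crude N l eps a (S m) s Hl Ha ltac:(lia) Hs). fold L in H.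
      pose proof (Cmod_ge_0 (partial_euler_prod l a m s)). pose proof (Cmod_ge_0 (dP l a m s)).
      pose proof (Cmod_ge_0 (euler_factor l a (S m) s)). pose proof (Cmod_ge_0 (gd l a (S m) s)).
      simpl. split.
      * rewrite Cmod_mult. nra.
      * eapply Rle_trans; [apply Cmod_triangle|]. rewrite !Cmod_mult.
        assert (Cmod (dP l a m s) * Cmod (euler_factor l a (S m) s) <= B * 4) by (apply Rmult_le_compat; auto).
        assert (Cmod (partial_euler_prod l a m s) * Cmod (gd l a (S m) s) <= B * (16 * L)) by (apply Rmult_le_compat; auto).
        nra.
    + destruct (IH m' s ltac:(lia) Hs) as [H1 H2]. split; nra.
Qed.

Lemma nat_split2 k : exists j b, (b = 0 \/ b = 1)%nat /\ k = (b + 2 * j)%nat.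
Proof.
  induction k as [|k [j [b [Hb Hk]]]].
  - exists 0%nat, 0%nat. split; [left|]; lia.
  - destruct Hb as [-> | ->].
    + exists j, 1%nat. split; [right|]; lia.
    + exists (S j), 0%nat. split; [left|]; lia.
Qed.

Lemma seq_gen (x : nat -> C) (p : nat -> R) N C1 C2 :
  0 <= C1 -> 0 <= C2 ->
  (forall M, (N <= M)%nat -> p (S M) <= p M) -> (forall M, (N <= M)%nat -> 0 <= p M) ->
  (forall M, (N <= M)%nat -> Cmod (x (S (S M)) - x M)%C <= C1 * (p M - p (S (S M)))) ->
  (forall M, (N <= M)%nat -> Cmod (x (S M) - x M)%C <= C2 * p M) ->
  forall n M, (N <= M)%nat -> (M <= n)%nat -> Cmod (x n - x M)%C <= (C1 + C2) * p M.
Proof.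
  intros HC1 HC2 Hp Hp0 Hpair Hsing n M HM Hn.
  assert (Hmono : forall k, p (M + k)%nat <= p M).
  { induction k. rewrite Nat.add_0_r; lra. replace (M + S k)%nat with (S (M + k)) by lia.
    pose proof (Hp (M + k)%nat ltac:(lia)). lra. }
  assert (Hj : forall j, Cmod (x (M + 2 * j)%nat - x M)%C <= C1 * (p M - p (M + 2 * j)%nat)).
  { induction j. replace (M + 2 * 0)%nat with M by lia. replace (x M - x M)%C with (RtoC 0) by ring.
    rewrite Cmod_0. lra.
    replace (M + 2 * S j)%nat with (S (S (M + 2 * j))) by lia.
    replace (x (S (S (M + 2 * j))) - x M)%C with ((x (S (S (M + 2 * j))) - x (M + 2 * j)%nat) + (x (M + 2 * j)%nat - x M))%C by ring.
    eapply Rle_trans; [apply Cmod_triangle|].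
    pose proof (Hpair (M + 2 * j)%nat ltac:(lia)). nra. }
  destruct (nat_split2 (n - M)) as [j [b [Hb Hk]]].
  assert (Hpn : forall k, 0 <= p (M + k)%nat) by (intros; apply Hp0; lia).
  destruct Hb as [-> | ->].
  - replace n with (M + 2 * j)%nat by lia. pose proof (Hj j). pose proof (Hpn (2 * j)%nat).
    assert (0 <= C2 * p M) by (apply Rmult_le_pos; auto; apply Hp0; auto). nra.
  - replace n with (S (M + 2 * j)) by lia.
    replace (x (S (M + 2 * j)) - x M)%C with ((x (S (M + 2 * j)) - x (M + 2 * j)%nat) + (x (M + 2 * j)%nat - x M))%C by ring.
    eapply Rle_trans; [apply Cmod_triangle|].
    pose proof (Hj j). pose proof (Hpn (2 * j)%nat). pose proof (Hsing (M + 2 * j)%nat ltac:(lia)).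
    pose proof (Hmono (2 * j)%nat). nra.
Qed.

Lemma P_SS l a m s : partial_euler_prod l a (S (S m)) s =
  (partial_euler_prod l a m s * (euler_factor l a (S m) s * euler_factor l a (S (S m)) s))%C.
Proof. simpl. ring. Qed.

Lemma dP_SS l a m s : dP l a (S (S m)) s =
  (dP l a m s * (euler_factor l a (S m) s * euler_factor l a (S (S m)) s) +
   partial_euler_prod l a m s * (gd l a (S m) s * euler_factor l a (S (S m)) s + euler_factor l a (S m) s * gd l a (S (S m)) s))%C.
Proof. simpl. ring. Qed.

Definition pa (eta : R) (a : nat -> Z) (M : nat) := phi eta (IZR (a M)).

Lemma exp_ge_1p (x : R) : 1 + x <= exp x.
Proof. apply exp_ineq1_le. Qed.

Lemma bounds_region N l eps a sig1 K : good_l N l eps -> good_a a -> (1 <= N)%nat -> 1/2 < sig1 -> 0 <= K ->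
  exists BP C, 0 <= BP /\ 0 <= C /\ forall s, sig1 <= fst s -> Cmod s <= K ->
    (forall M, Cmod (partial_euler_prod l a M s) <= BP) /\
    (forall n M, (N <= M)%nat -> (M <= n)%nat ->
       Cmod (partial_euler_prod l a n s - partial_euler_prod l a M s)%C <= C * pa (etaof sig1) a M /\
       Cmod (dP l a n s - dP l a M s)%C <= C * pa (etaof sig1) a M).
Proof.
  intros Hl Ha HN Hs HK.
  destruct (pair_bounds N l eps a sig1 K Hl Ha HN Hs HK) as [cU [cG [HcU [HcG Hpair]]]].
  destruct (single_bounds N l eps a sig1 Hl Ha Hs) as [cS [HcS Hsing]].
  destruct (crude N l eps a Hl Ha (S N)) as [B0 [HB0 Hcr]].
  set (eta := etaof sig1) in *. assert (He : 0 < eta) by (unfold eta, etaof; lra).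
  assert (HeU : 1 <= exp cU) by (rewrite <- exp_0; apply exp_le; lra).
  set (BP := B0 * exp cU). set (BD := (B0 + BP * cG) * exp cU).
  assert (HBP : 0 <= BP) by (unfold BP; nra).
  assert (HBPc : 0 <= BP * cG) by nra.
  assert (HBD : 0 <= BD) by (unfold BD; nra).
  set (C1P := BP * cU). set (C2P := BP * cS).
  set (C1D := BD * cU + BP * cG). set (C2D := (BD + BP) * cS).
  assert (H1P : 0 <= C1P) by (unfold C1P; nra). assert (H2P : 0 <= C2P) by (unfold C2P; nra).
  assert (H1D : 0 <= C1D) by (unfold C1D; nra). assert (H2D : 0 <= C2D) by (unfold C2D; nra).
  exists BP, (C1P + C2P + (C1D + C2D)). split; auto. split; [lra|].
  intros s Hs1 HsK.
  assert (Hsig : 1/2 < fst s) by lra.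
  assert (Hp1 : forall M, (1 <= M)%nat -> 0 <= pa eta a M <= 1).
  { intros M HM. unfold pa. split. left; apply phi_pos. apply phi_le1. lra.
    pose proof (a_ge2 a Ha M HM). lra. }
  assert (Hpd : forall M, (1 <= M)%nat -> pa eta a (S M) <= pa eta a M).
  { intros M HM. unfold pa. apply phi_anti. lra. pose proof (a_ge2 a Ha M HM). lra.
    pose proof (a_step a Ha M HM). lra. }
  assert (HPair : forall M, (N <= M)%nat ->
    Cmod (euler_factor l a (S M) s * euler_factor l a (S (S M)) s - RtoC 1)%C <= cU * (pa eta a M - pa eta a (S (S M))) /\
    Cmod (gd l a (S M) s * euler_factor l a (S (S M)) s + euler_factor l a (S M) s * gd l a (S (S M)) s)%C <= cG * (pa eta a M - pa eta a (S (S M)))).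
  { intros M HM. destruct (Hpair s M Hs1 HsK HM) as [A [B _]]. split; [exact A|exact B]. }
  assert (HSing : forall M, (1 <= M)%nat ->
    Cmod (euler_factor l a (S M) s - RtoC 1)%C <= cS * pa eta a M /\ Cmod (gd l a (S M) s) <= cS * pa eta a M).
  { intros M HM. destruct (Hsing s M Hs1 HM) as [A B]. split; [exact A|exact B]. }
  assert (Hgg : forall M, (N <= M)%nat ->
    Cmod (euler_factor l a (S M) s * euler_factor l a (S (S M)) s)%C <= exp (cU * (pa eta a M - pa eta a (S (S M))))).
  { intros M HM. destruct (HPair M HM) as [A _].
    replace (euler_factor l a (S M) s * euler_factor l a (S (S M)) s)%C with
      ((euler_factor l a (S M) s * euler_factor l a (S (S M)) s - RtoC 1) + RtoC 1)%C by ring.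
    eapply Rle_trans; [apply Cmod_triangle|]. rewrite Cmod_1.
    eapply Rle_trans; [|apply exp_ge_1p]. lra. }
  assert (Hmono : forall M k, (1 <= M)%nat -> pa eta a (M + k)%nat <= pa eta a M).
  { intros M k HM. induction k. rewrite Nat.add_0_r; lra.
    replace (M + S k)%nat with (S (M + k)) by lia. pose proof (Hpd (M + k)%nat ltac:(lia)). lra. }
  assert (SA : forall M, (N <= M)%nat -> forall j,
    Cmod (partial_euler_prod l a (M + 2 * j) s) <= Cmod (partial_euler_prod l a M s) * exp (cU * (pa eta a M - pa eta a (M + 2 * j)%nat))).
  { intros M HM j. induction j.
    - replace (M + 2 * 0)%nat with M by lia. rewrite Rminus_diag, Rmult_0_r, exp_0. lra.
    - replace (M + 2 * S j)%nat with (S (S (M + 2 * j))) by lia. rewrite P_SS, Cmod_mult.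
      pose proof (Hgg (M + 2 * j)%nat ltac:(lia)).
      pose proof (Cmod_ge_0 (partial_euler_prod l a (M + 2 * j) s)).
      pose proof (Cmod_ge_0 (euler_factor l a (S (M + 2 * j)) s * euler_factor l a (S (S (M + 2 * j))) s)%C).
      eapply Rle_trans. apply Rmult_le_compat; eauto.
      rewrite Rmult_assoc, <- exp_plus. right. f_equal. f_equal. ring. }
  assert (SB : forall M, Cmod (partial_euler_prod l a M s) <= BP).
  { intros M. destruct (le_lt_dec M (S N)) as [HM|HM].
    - destruct (Hcr M s HM Hsig) as [A _]. unfold BP. nra.
    - destruct (nat_split2 (M - N)) as [j [b [Hb Hk]]].
      assert (HNb : (N <= N + b)%nat) by lia.
      pose proof (SA (N + b)%nat HNb j). replace (N + b + 2 * j)%nat with M in H by lia.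
      destruct (Hcr (N + b)%nat s ltac:(lia) Hsig) as [A _].
      pose proof (Hp1 (N + b)%nat ltac:(lia)). pose proof (Hp1 M ltac:(lia)).
      assert (exp (cU * (pa eta a (N + b) - pa eta a M)) <= exp cU) by (apply exp_le; nra).
      pose proof (exp_pos (cU * (pa eta a (N + b) - pa eta a M))).
      pose proof (Cmod_ge_0 (partial_euler_prod l a (N + b) s)).
      unfold BP. eapply Rle_trans; [apply H|]. apply Rmult_le_compat; lra. }
  assert (SC : forall M, (N <= M)%nat -> forall j,
    Cmod (dP l a (M + 2 * j) s) <= (Cmod (dP l a M s) + BP * cG * (pa eta a M - pa eta a (M + 2 * j)%nat)) *
       exp (cU * (pa eta a M - pa eta a (M + 2 * j)%nat))).
  { intros M HM j. induction j.
    - replace (M + 2 * 0)%nat with M by lia. rewrite Rminus_diag, !Rmult_0_r, exp_0. lra.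
    - replace (M + 2 * S j)%nat with (S (S (M + 2 * j))) by lia. rewrite dP_SS.
      set (m := (M + 2 * j)%nat) in *.
      pose proof (Hgg m ltac:(lia)). destruct (HPair m ltac:(lia)) as [_ HG].
      eapply Rle_trans; [apply Cmod_triangle|]. rewrite !Cmod_mult.
      set (S0 := pa eta a M - pa eta a m). set (Dl := pa eta a m - pa eta a (S (S m))).
      assert (HS0 : 0 <= S0) by (unfold S0, m; pose proof (Hmono M (2 * j)%nat ltac:(lia)); lra).
      assert (HDl : 0 <= Dl).
      { unfold Dl. replace (S (S m)) with (m + 2)%nat by lia. pose proof (Hmono m 2%nat ltac:(lia)). lra. }
      replace (pa eta a M - pa eta a (S (S m))) with (S0 + Dl) by (unfold S0, Dl; ring).
      pose proof (Cmod_ge_0 (dP l a m s)). pose proof (SB m).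
      pose proof (Cmod_ge_0 (partial_euler_prod l a m s)).
      pose proof (Cmod_ge_0 (euler_factor l a (S m) s * euler_factor l a (S (S m)) s)%C).
      pose proof (Cmod_ge_0 (gd l a (S m) s * euler_factor l a (S (S m)) s + euler_factor l a (S m) s * gd l a (S (S m)) s)%C).
      assert (HE1 : 1 <= exp (cU * (S0 + Dl))) by (rewrite <- exp_0; apply exp_le; nra).
      assert (HEs : exp (cU * S0) * exp (cU * Dl) = exp (cU * (S0 + Dl))) by (rewrite <- exp_plus; f_equal; ring).
      pose proof (exp_pos (cU * S0)). pose proof (exp_pos (cU * Dl)).
      set (Dm := Cmod (dP l a m s)) in *.
      assert (T1 : Dm * Cmod (euler_factor l a (S m) s * euler_factor l a (S (S m)) s)%C <=
                   (Cmod (dP l a M s) + BP * cG * S0) * exp (cU * (S0 + Dl))).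
      { rewrite <- HEs. rewrite <- Rmult_assoc. apply Rmult_le_compat; auto. }
      assert (T2 : Cmod (partial_euler_prod l a m s) *
          Cmod (gd l a (S m) s * euler_factor l a (S (S m)) s + euler_factor l a (S m) s * gd l a (S (S m)) s)%C
          <= BP * cG * Dl * exp (cU * (S0 + Dl))).
      { apply Rle_trans with (BP * (cG * Dl)). apply Rmult_le_compat; auto.
        assert (0 <= BP * cG * Dl) by nra. nra. }
      assert (0 <= BP * cG * Dl * exp (cU * (S0 + Dl))) by (pose proof (exp_pos (cU * (S0 + Dl))); nra).
      rewrite <- (Cmod_mult (euler_factor l a (S m) s)). lra. }
  assert (SD : forall M, Cmod (dP l a M s) <= BD).
  { intros M. destruct (le_lt_dec M (S N)) as [HM|HM].
    - destruct (Hcr M s HM Hsig) as [_ A]. unfold BD. nra.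
    - destruct (nat_split2 (M - N)) as [j [b [Hb Hk]]].
      assert (HNb : (N <= N + b)%nat) by lia.
      pose proof (SC (N + b)%nat HNb j). replace (N + b + 2 * j)%nat with M in H by lia.
      destruct (Hcr (N + b)%nat s ltac:(lia) Hsig) as [_ A].
      pose proof (Hp1 (N + b)%nat ltac:(lia)). pose proof (Hp1 M ltac:(lia)).
      assert (exp (cU * (pa eta a (N + b) - pa eta a M)) <= exp cU) by (apply exp_le; nra).
      pose proof (exp_pos (cU * (pa eta a (N + b) - pa eta a M))).
      pose proof (Cmod_ge_0 (dP l a (N + b) s)).
      assert (BP * cG * (pa eta a (N + b) - pa eta a M) <= BP * cG) by nra.
      assert (pa eta a M <= pa eta a (N + b)%nat).
      { replace M with (N + b + (M - N - b))%nat at 1 by lia. apply Hmono. lia. }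
      assert (0 <= BP * cG * (pa eta a (N + b) - pa eta a M)) by nra.
      unfold BD. eapply Rle_trans; [apply H|]. apply Rmult_le_compat; lra. }
  split; auto.
  intros n M HM Hn.
  assert (HN1 : forall M', (N <= M')%nat -> (1 <= M')%nat) by (intros; lia).
  split.
  - eapply Rle_trans.
    apply (seq_gen (fun k => partial_euler_prod l a k s) (pa eta a) N C1P C2P); [exact H1P | exact H2P | | | | | exact HM | exact Hn].
    + intros M' H'. apply Hpd. lia.
    + intros M' H'. apply Hp1. lia.
    + intros M' H'. cbv beta. rewrite P_SS.
      replace (partial_euler_prod l a M' s * (euler_factor l a (S M') s * euler_factor l a (S (S M')) s) - partial_euler_prod l a M' s)%C
        with (partial_euler_prod l a M' s * (euler_factor l a (S M') s * euler_factor l a (S (S M')) s - RtoC 1))%C by ring.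
      rewrite Cmod_mult. destruct (HPair M' H') as [A _]. unfold C1P. rewrite Rmult_assoc.
      apply Rmult_le_compat; auto; apply Cmod_ge_0.
    + intros M' H'. simpl.
      replace (partial_euler_prod l a M' s * euler_factor l a (S M') s - partial_euler_prod l a M' s)%C
        with (partial_euler_prod l a M' s * (euler_factor l a (S M') s - RtoC 1))%C by ring.
      rewrite Cmod_mult. destruct (HSing M' ltac:(lia)) as [A _]. unfold C2P. rewrite Rmult_assoc.
      apply Rmult_le_compat; auto; apply Cmod_ge_0.
    + pose proof (Hp1 M ltac:(lia)). nra.
  - eapply Rle_trans.
    apply (seq_gen (fun k => dP l a k s) (pa eta a) N C1D C2D); [exact H1D | exact H2D | | | | | exact HM | exact Hn].
    + intros M' H'. apply Hpd. lia.
    + intros M' H'. apply Hp1. lia.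
    + intros M' H'. cbv beta. rewrite dP_SS.
      replace (dP l a M' s * (euler_factor l a (S M') s * euler_factor l a (S (S M')) s) +
        partial_euler_prod l a M' s * (gd l a (S M') s * euler_factor l a (S (S M')) s + euler_factor l a (S M') s * gd l a (S (S M')) s) - dP l a M' s)%C
        with (dP l a M' s * (euler_factor l a (S M') s * euler_factor l a (S (S M')) s - RtoC 1) +
        partial_euler_prod l a M' s * (gd l a (S M') s * euler_factor l a (S (S M')) s + euler_factor l a (S M') s * gd l a (S (S M')) s))%C by ring.
      eapply Rle_trans; [apply Cmod_triangle|]. rewrite !Cmod_mult.
      destruct (HPair M' H') as [A B].
      pose proof (SD M'). pose proof (SB M').
      assert (0 <= pa eta a M' - pa eta a (S (S M'))).
      { replace (S (S M')) with (M' + 2)%nat by lia. pose proof (Hmono M' 2%nat ltac:(lia)). lra. }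
      unfold C1D.
      assert (Cmod (dP l a M' s) * Cmod (euler_factor l a (S M') s * euler_factor l a (S (S M')) s - RtoC 1)%C <= BD * (cU * (pa eta a M' - pa eta a (S (S M'))))).
      { apply Rmult_le_compat; auto; apply Cmod_ge_0. }
      assert (Cmod (partial_euler_prod l a M' s) * Cmod (gd l a (S M') s * euler_factor l a (S (S M')) s + euler_factor l a (S M') s * gd l a (S (S M')) s)%C <= BP * (cG * (pa eta a M' - pa eta a (S (S M'))))).
      { apply Rmult_le_compat; auto; apply Cmod_ge_0. }
      nra.
    + intros M' H'. simpl.
      replace (dP l a M' s * euler_factor l a (S M') s + partial_euler_prod l a M' s * gd l a (S M') s - dP l a M' s)%C
        with (dP l a M' s * (euler_factor l a (S M') s - RtoC 1) + partial_euler_prod l a M' s * gd l a (S M') s)%C by ring.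
      eapply Rle_trans; [apply Cmod_triangle|]. rewrite !Cmod_mult.
      destruct (HSing M' ltac:(lia)) as [A B]. pose proof (SD M'). pose proof (SB M').
      assert (Cmod (dP l a M' s) * Cmod (euler_factor l a (S M') s - RtoC 1)%C <= BD * (cS * pa eta a M')).
      { apply Rmult_le_compat; auto; apply Cmod_ge_0. }
      assert (Cmod (partial_euler_prod l a M' s) * Cmod (gd l a (S M') s) <= BP * (cS * pa eta a M')).
      { apply Rmult_le_compat; auto; apply Cmod_ge_0. }
      unfold C2D. nra.
    + pose proof (Hp1 M ltac:(lia)). nra.
Qed.

Lemma P_lower0 N l eps a s : good_l N l eps -> good_a a -> 1/2 < fst s ->
  forall m, (1/2)^m <= Cmod (partial_euler_prod l a m s).
Proof.
  intros Hl Ha Hs m. induction m as [|m IH].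
  - simpl. rewrite Cmod_1. lra.
  - simpl partial_euler_prod. rewrite Cmod_mult.
    destruct (g_bounds N l eps a (S m) s Hl Ha ltac:(lia) Hs) as [_ [_ Hg]].
    simpl. pose proof (pow_lt (1/2) m ltac:(lra)). nra.
Qed.

Lemma P_lower N l eps a s : good_l N l eps -> good_a a -> (1 <= N)%nat -> 1/2 < fst s ->
  exists beta, 0 < beta /\ forall j, beta <= Cmod (partial_euler_prod l a (N + 2 * j) s).
Proof.
  intros Hl Ha HN Hs.
  set (sig1 := (fst s + 1/2) / 2).
  destruct (pair_bounds N l eps a sig1 (Cmod s) Hl Ha HN ltac:(unfold sig1; lra) (Cmod_ge_0 s))
    as [cU [cG [HcU [_ Hpair]]]].
  set (eta := etaof sig1) in *. assert (He : 0 < eta) by (unfold eta, etaof, sig1; lra).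
  exists ((1/2)^N * exp (- cU)). split.
  { apply Rmult_lt_0_compat. apply pow_lt; lra. apply exp_pos. }
  assert (Hp1 : forall M, (1 <= M)%nat -> 0 <= pa eta a M <= 1).
  { intros M HM. unfold pa. split. left; apply phi_pos. apply phi_le1. lra.
    pose proof (a_ge2 a Ha M HM). lra. }
  assert (Hmono : forall M k, (1 <= M)%nat -> pa eta a (M + k)%nat <= pa eta a M).
  { intros M k HM. induction k. rewrite Nat.add_0_r; lra.
    replace (M + S k)%nat with (S (M + k)) by lia. unfold pa in *. eapply Rle_trans; [|apply IHk].
    apply phi_anti. lra. pose proof (a_ge2 a Ha (M + k)%nat ltac:(lia)). lra.
    pose proof (a_step a Ha (M + k)%nat ltac:(lia)). lra. }
  assert (Hj : forall j, Cmod (partial_euler_prod l a N s) * exp (- cU * (pa eta a N - pa eta a (N + 2 * j)%nat))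
     <= Cmod (partial_euler_prod l a (N + 2 * j) s)).
  { intros j. induction j.
    - replace (N + 2 * 0)%nat with N by lia. rewrite Rminus_diag, Rmult_0_r, exp_0. lra.
    - replace (N + 2 * S j)%nat with (S (S (N + 2 * j))) by lia. rewrite P_SS, Cmod_mult.
      set (m := (N + 2 * j)%nat) in *.
      destruct (Hpair s m ltac:(unfold sig1; lra) ltac:(lra) ltac:(lia)) as [_ [_ H3]].
      change (1 <= Cmod (euler_factor l a (S m) s * euler_factor l a (S (S m)) s)%C * (1 + cU * (pa eta a m - pa eta a (S (S m))))) in H3.
      set (G := Cmod (euler_factor l a (S m) s * euler_factor l a (S (S m)) s)%C) in *.
      set (Dl := pa eta a m - pa eta a (S (S m))).
      assert (HG0 : 0 <= G) by apply Cmod_ge_0.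
      assert (HGe : exp (- cU * Dl) <= G).
      { pose proof (exp_ge_1p (cU * Dl)). pose proof (exp_pos (cU * Dl)).
        assert (H3b : 1 <= G * (1 + cU * Dl)) by (unfold Dl, G; exact H3). assert (1 <= G * exp (cU * Dl)) by nra.
        replace (exp (- cU * Dl)) with (/ exp (cU * Dl)) by (rewrite <- exp_Ropp; f_equal; ring).
        apply Rmult_le_reg_r with (exp (cU * Dl)); auto. rewrite Rinv_l by lra. lra. }
      replace (- cU * (pa eta a N - pa eta a (S (S m)))) with (- cU * (pa eta a N - pa eta a m) + - cU * Dl) by (unfold Dl; ring).
      rewrite exp_plus.
      pose proof (exp_pos (- cU * (pa eta a N - pa eta a m))). pose proof (exp_pos (- cU * Dl)).
      pose proof (Cmod_ge_0 (partial_euler_prod l a N s)).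
      rewrite <- Rmult_assoc. apply Rmult_le_compat; auto. apply Rmult_le_pos; lra. lra. }
  intros j. eapply Rle_trans; [|apply Hj].
  pose proof (P_lower0 N l eps a s Hl Ha Hs N).
  pose proof (Hp1 N HN). pose proof (Hp1 (N + 2 * j)%nat ltac:(lia)).
  apply Rmult_le_compat; auto. left; apply pow_lt; lra. left; apply exp_pos.
  apply exp_le. pose proof (Hmono N (2 * j)%nat HN). nra.
Qed.

Lemma phi_to0 a eta : good_a a -> 0 < eta -> forall del, 0 < del ->
  exists M0, forall M, (M0 <= M)%nat -> (1 <= M)%nat -> pa eta a M <= del.
Proof.
  intros Ha He del Hd.
  set (T := exp (- ln del / eta)).
  destruct (archimed T) as [H1 _].
  assert (HT : 0 < T) by apply exp_pos.
  assert (Hup : (0 < up T)%Z) by (apply lt_0_IZR; lra).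
  exists (Z.to_nat (up T)). intros M HM HM1.
  assert (HMT : T <= INR M).
  { apply le_INR in HM. rewrite INR_IZR_INZ, Z2Nat.id in HM by lia. lra. }
  pose proof (a_ge a Ha M HM1).
  unfold pa, phi. rewrite <- (exp_ln del) by auto. apply exp_le.
  assert (ln T <= ln (IZR (a M))) by (apply ln_le; lra).
  unfold T in H0. rewrite ln_exp in H0.
  apply Rmult_le_reg_l with (/ eta). apply Rinv_0_lt_compat; auto.
  replace (/ eta * (- eta * ln (IZR (a M)))) with (- ln (IZR (a M))) by (field; lra).
  replace (/ eta * ln del) with (ln del / eta) by (unfold Rdiv; ring).
  replace (- ln del / eta) with (- (ln del / eta)) in H0 by (unfold Rdiv; ring). lra.
Qed.

Lemma unif_cauchy N l eps a sig1 K : good_l N l eps -> good_a a -> (1 <= N)%nat -> 1/2 < sig1 -> 0 <= K ->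
  forall e, 0 < e -> exists M0, forall m n s, (M0 <= m)%nat -> (M0 <= n)%nat -> sig1 <= fst s -> Cmod s <= K ->
    Cmod (partial_euler_prod l a m s - partial_euler_prod l a n s)%C <= e /\
    Cmod (dP l a m s - dP l a n s)%C <= e.
Proof.
  intros Hl Ha HN Hs HK e He.
  destruct (bounds_region N l eps a sig1 K Hl Ha HN Hs HK) as [BP [C [HBP [HC Hb]]]].
  assert (Heta : 0 < etaof sig1) by (unfold etaof; lra).
  destruct (phi_to0 a (etaof sig1) Ha Heta (e / (2 * C + 1))) as [M0 HM0].
  { apply Rdiv_lt_0_compat; lra. }
  set (M1 := max M0 N).
  exists M1. intros m n s Hm Hn Hs1 HsK.
  destruct (Hb s Hs1 HsK) as [_ Hc].
  destruct (Hc m M1 ltac:(unfold M1; lia) Hm) as [A1 B1].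
  destruct (Hc n M1 ltac:(unfold M1; lia) Hn) as [A2 B2].
  pose proof (HM0 M1 ltac:(unfold M1; lia) ltac:(unfold M1; lia)).
  assert (Hpa : C * pa (etaof sig1) a M1 <= e / 2).
  { set (q := e / (2 * C + 1)) in *.
    assert (Hq : q * (2 * C + 1) = e) by (unfold q; field; lra).
    assert (Hq0 : 0 < q) by (unfold q; apply Rdiv_lt_0_compat; lra).
    apply Rle_trans with (C * q). apply Rmult_le_compat_l; auto. nra. }
  split.
  - replace (partial_euler_prod l a m s - partial_euler_prod l a n s)%C with
      ((partial_euler_prod l a m s - partial_euler_prod l a M1 s) + - (partial_euler_prod l a n s - partial_euler_prod l a M1 s))%C by ring.
    eapply Rle_trans; [apply Cmod_triangle|]. rewrite Cmod_opp. lra.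
  - replace (dP l a m s - dP l a n s)%C with
      ((dP l a m s - dP l a M1 s) + - (dP l a n s - dP l a M1 s))%C by ring.
    eapply Rle_trans; [apply Cmod_triangle|]. rewrite Cmod_opp. lra.
Qed.

Lemma pointwise N l eps a s : good_l N l eps -> good_a a -> (1 <= N)%nat -> 1/2 < fst s ->
  forall e, 0 < e -> exists M, forall n, (M <= n)%nat ->
    Cmod (partial_euler_prod l a n s - Clim (fun M => partial_euler_prod l a M s))%C < e.
Proof.
  intros Hl Ha HN Hs. apply Clim_correct.
  intros e He.
  destruct (unif_cauchy N l eps a ((fst s + 1/2)/2) (Cmod s) Hl Ha HN ltac:(lra) (Cmod_ge_0 s) e He) as [M HM].
  exists M. intros m n Hm Hn. apply (HM m n s Hm Hn); lra.
Qed.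

Theorem proposition2p1
  (N : nat) (HN : (1 <= N)%nat)
  (l : nat -> R) (eps : R)
  (Heps : eps = 1 \/ eps = -1)
  (Hl_range : forall n : nat, (1 <= n)%nat -> -1 <= l n <= 1)
  (Hl_tail : forall n : nat, (N <= n)%nat -> l n = eps * (-1) ^ n)
  (a : nat -> Z)
  (Ha1 : (2 <= a 1%nat)%Z)
  (Ha_incr : forall n : nat, (1 <= n)%nat -> (a n < a (S n))%Z) :
  exists F : C -> C,
    (forall s : C, 1 < Re s ->
       filterlim (fun M : nat => partial_euler_prod l a M s) eventually (locally (F s))) /\
    (forall s : C, 1 / 2 < Re s -> C_holomorphic_at F s /\ F s <> RtoC 0).
Proof.
  assert (Hl : good_l N l eps) by (split; auto).
  assert (Ha : good_a a) by (split; auto).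
  exists (fun s => Clim (fun M => partial_euler_prod l a M s)).
  split.
  - intros s Hs. apply Cseq_filterlim. apply (pointwise N l eps a s Hl Ha HN). unfold Re in Hs. lra.
  - intros s0 Hs0. unfold Re in Hs0. split.
    + set (r := (fst s0 - 1/2) / 2).
      assert (Hr : 0 < r) by (unfold r; lra).
      assert (Hball : forall z, Cmod (z - s0)%C < r -> fst s0 - r <= fst z /\ Cmod z <= Cmod s0 + r).
      { intros z Hz. split.
        - pose proof (Rabs_fst_le (z - s0)%C). rewrite fst_minus in H.
          apply Rabs_le_inv in H. lra.
        - replace z with (s0 + (z - s0))%C at 1 by ring.
          eapply Rle_trans; [apply Cmod_triangle|]. lra. }
      apply (hasD_holo _ s0 (Clim (fun n => dP l a n s0))).
      apply (lim_hasD (fun n => partial_euler_prod l a n) (fun n => dP l a n) _ s0 r Hr).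
      * intros n z Hz. destruct (Hball z Hz). apply (hasD_P N l eps); auto. unfold r in H. lra.
      * intros z Hz. destruct (Hball z Hz). apply (pointwise N l eps a z Hl Ha HN). unfold r in H. lra.
      * intros e He.
        assert (HK : 0 <= Cmod s0 + r) by (pose proof (Cmod_ge_0 s0); lra).
        destruct (unif_cauchy N l eps a (fst s0 - r) (Cmod s0 + r) Hl Ha HN ltac:(unfold r; lra) HK e He) as [M HM].
        exists M. intros m n z Hm Hn Hz. destruct (Hball z Hz). apply (HM m n z Hm Hn); auto.
    + intros Habs.
      destruct (P_lower N l eps a s0 Hl Ha HN Hs0) as [beta [Hb Hbeta]].
      destruct (pointwise N l eps a s0 Hl Ha HN Hs0 beta Hb) as [M HM].
      specialize (HM (N + 2 * M)%nat ltac:(lia)). specialize (Hbeta M).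
      cbv beta in Habs. rewrite Habs in HM.
      replace (partial_euler_prod l a (N + 2 * M) s0 - RtoC 0)%C with (partial_euler_prod l a (N + 2 * M) s0) in HM by ring.
      lra.
Qed.
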